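(* Let $\Omega$ be the set of all valid triples $\{\varphi\}\ a\ \{\psi\}$ with $a\in\mathsf{Act}$. For every well-formed program $C$ and every assertion $\varphi\subseteq\mathcal W(\Sigma)$, $\Omega\vdash\{\varphi\}\ C\ \{\mathrm{post}(C,\varphi)\}$, where $\mathrm{post}(C,\varphi)=\{[\![C]\!]^\dagger(m): m\in\varphi\}$.
   Context: Semiring and weights. Let $\mathcal A=\langle U,+,\cdot,\mathbf 0,\mathbf 1\rangle$ be a partial semiring: $\langle U,+,\mathbf 0\rangle$ is a commutative monoid in which $+$ may be partial, $\langle U,\cdot,\mathbf 1\rangle$ is a monoid with $\cdot$ total, $\cdot$ distributes over $+$ on both sides, and $\mathbf 0$ annihilates. Natural order: $u\le v$ iff $u+w=v$ for some $w$. Assume $\mathcal A$ is naturally ordered ($\le$ a partial order), Scott continuous ($+$ and $\cdot$ preserve suprema of directed sets in each argument), and has a top element. Infinite sums $\sum_{i\in I}u_i$ are suprema of finite partial sums. $\mathcal W(X)$ is the set of $m:X\to U$ with countable support $\mathrm{supp}(m)=\{x:m(x)\neq\mathbf 0\}$ and defined mass $|m|=\sum_{x\in\mathrm{supp}(m)}m(x)$; operations $+$, $u\cdot m$, $m\cdot u$, $\mathbf 0$ are pointwise and $m_1\sqsubseteq m_2$ iff $m_1+m=m_2$ for some $m$. $\eta(x)(y)=\mathbf 1$ if $x=y$, else $\mathbf 0$; $f^\dagger(m)(y)=\sum_{x\in\mathrm{supp}(m)}m(x)\cdot f(x)(y)$. Programs. States $\Sigma$, atomic actions $\mathsf{Act}$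 with $[\![a]\!]_{\mathsf{Act}}:\Sigma\to\mathcal W(\Sigma)$, primitive tests $\mathsf{Test}\subseteq 2^\Sigma$. Syntax: $C::=\mathsf{skip}\mid C_1;C_2\mid C_1+C_2\mid\mathsf{assume}\ e\mid C^{\langle e,e'\rangle}\mid a$; $e::=b\mid u$ ($u\in U$); $b::=\mathsf{true}\mid\mathsf{false}\mid b_1\vee b_2\mid b_1\wedge b_2\mid\neg b\mid t$ ($t\in\mathsf{Test}$). Tests evaluate to $\mathbf 0/\mathbf 1$ by Boolean evaluation with $[\![t]\!](\sigma)=\mathbf 1$ iff $\sigma\in t$; $[\![u]\!](\sigma)=u$. Semantics: $[\![\mathsf{skip}]\!](\sigma)=\eta(\sigma)$; $[\![C_1;C_2]\!](\sigma)=[\![C_2]\!]^\dagger([\![C_1]\!](\sigma))$; $[\![C_1+C_2]\!](\sigma)=[\![C_1]\!](\sigma)+[\![C_2]\!](\sigma)$; $[\![a]\!]=[\![a]\!]_{\mathsf{Act}}$; $[\![\mathsf{assume}\ e]\!](\sigma)=[\![e]\!](\sigma)\cdot\eta(\sigma)$; $[\![C^{\langle e,e'\rangle}]\!]$ is the least fixed point (pointwise order) of $\Phi(f)(\sigma)=[\![e]\!](\sigma)\cdot f^\dagger([\![C]\!](\sigma))+[\![e']\!](\sigma)\cdot\eta(\sigma)$. Well-formed: semantics is total. Assertions and triples. Assertions are subsets of $\mathcal W(\Sigma)$; $\bigoplus_{x\in T}\phi(x)=\{\sum_{t\in T}m_t: m_t\in\phi(t)\ \forall t\}$, $\varphi\oplus\psi$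 the binary case, $u\odot\varphi=\{u\cdot m: m\in\varphi\}$, $\varphi\odot u=\{m\cdot u:m\in\varphi\}$. $\vDash\{\varphi\}C\{\psi\}$ iff $[\![C]\!]^\dagger(m)\in\psi$ for all $m\in\varphi$. Proof system. $\Gamma\vdash\{\varphi\}C\{\psi\}$: derivable from axioms in $\Gamma$ using: (Skip) $\{\varphi\}\mathsf{skip}\{\varphi\}$; (Seq) $\{\varphi\}C_1\{\vartheta\},\{\vartheta\}C_2\{\psi\}\Rightarrow\{\varphi\}C_1;C_2\{\psi\}$; (Plus) $\{\varphi\}C_1\{\psi_1\},\{\varphi\}C_2\{\psi_2\}\Rightarrow\{\varphi\}C_1+C_2\{\psi_1\oplus\psi_2\}$; (Assume) if $[\![e]\!](\sigma)=u$ for all $m\in\varphi$, $\sigma\in\mathrm{supp}(m)$ then $\{\varphi\}\mathsf{assume}\ e\{\varphi\odot u\}$; (Iter) if $(\psi_n)_{n\in\mathbb N}$ converges to $\psi_\infty$ (whenever $m_n\in\psi_n$ for all $n$, $\sum_n m_n\in\psi_\infty$) and for all $n$, $\{\varphi_n\}\mathsf{assume}\ e;C\{\varphi_{n+1}\}$ and $\{\varphi_n\}\mathsf{assume}\ e'\{\psi_n\}$, then $\{\varphi_0\}C^{\langle e,e'\rangle}\{\psi_\infty\}$; (False) $\{\emptyset\}C\{\varphi\}$; (True) $\{\varphi\}C\{\mathcal W(\Sigma)\}$; (Scale) $\{\varphi\}C\{\psi\}\Rightarrow\{u\odot\varphi\}C\{u\odot\psi\}$; (Disj), (Conj): combine two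 triples with $\cup$, resp. $\cap$, on both sides; (Choice) $\forall t\in T.\{\phi(t)\}C\{\phi'(t)\}\Rightarrow\{\bigoplus_{x\in T}\phi(x)\}C\{\bigoplus_{x\in T}\phi'(x)\}$; (Exists) same premises $\Rightarrow\{\bigcup_t\phi(t)\}C\{\bigcup_t\phi'(t)\}$; (Consequence) $\varphi'\subseteq\varphi$, $\{\varphi\}C\{\psi\}$, $\psi\subseteq\psi'\Rightarrow\{\varphi'\}C\{\psi'\}$. *)

(* Defs.v *)
From Stdlib Require Import List ClassicalEpsilon.
Import ListNotations.

Set Implicit Arguments.
Unset Strict Implicit.

Section Order.
Variable U : Type.
Variable add : U -> U -> option U.

Definition nle (u v : U) : Prop := exists w, add u w = Some v.

Definition is_sup (D : U -> Prop) (s : U) : Prop :=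
  (forall d, D d -> nle d s) /\ (forall b, (forall d, D d -> nle d b) -> nle s b).

Definition directed (D : U -> Prop) : Prop :=
  (exists d, D d) /\
  (forall x y, D x -> D y -> exists z, D z /\ nle x z /\ nle y z).
End Order.

Record PSemiring := {
  car :> Type;
  padd : car -> car -> option car;
  pmul : car -> car -> car;
  pzero : car;
  pone : car;
  padd_comm : forall a b, padd a b = padd b a;
  padd_0r : forall a, padd a pzero = Some a;
  padd_assoc : forall a b c ab abc, padd a b = Some ab -> padd ab c = Some abc ->
      exists bc, padd b c = Some bc /\ padd a bc = Some abc;
  pmul_assoc : forall a b c, pmul a (pmul b c) = pmul (pmul a b) c;
  pmul_1l : forall a, pmul pone a = a;
  pmul_1r : forall a, pmul a pone = a;
  pmul_addr : forall a b c s, padd a b = Some s -> padd (pmul c a) (pmul c b) = Some (pmul c s);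
  pmul_addl : forall a b c s, padd a b = Some s -> padd (pmul a c) (pmul b c) = Some (pmul s c);
  pmul_0l : forall a, pmul pzero a = pzero;
  pmul_0r : forall a, pmul a pzero = pzero;
  (* naturally ordered: the natural order is antisymmetric (refl/trans hold) *)
  nle_antisym : forall a b, nle padd a b -> nle padd b a -> a = b;
  dir_sup : forall D, directed padd D -> exists s, is_sup padd D s;
  padd_cont : forall a D s, directed padd D -> is_sup padd D s ->
      (forall d, D d -> exists v, padd a d = Some v) ->
      exists v, padd a s = Some v /\
        is_sup padd (fun w => exists d, D d /\ padd a d = Some w) v;
  pmul_contl : forall a D s, directed padd D -> is_sup padd D s ->
      is_sup padd (fun w => exists d, D d /\ w = pmul a d) (pmul a s);
  pmul_contr : forall a D s, directed padd D -> is_sup padd D s ->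
      is_sup padd (fun w => exists d, D d /\ w = pmul d a) (pmul s a);
  ptop_ex : exists t, forall u, nle padd u t
}.

Section Weights.
Variable S : PSemiring.
Local Notation U := (car S).
Local Notation add := (@padd S).
Local Notation mul := (@pmul S).
Local Notation zero := (pzero S).
Local Notation one := (pone S).

Definition fsum {X : Type} (l : list X) (f : X -> U) : option U :=
  fold_right (fun x acc => match acc with Some s => add (f x) s | None => None end)
             (Some zero) l.

Definition finite_sub {X : Type} (I : X -> Prop) (l : list X) : Prop :=
  NoDup l /\ (forall x, In x l -> I x).

Definition is_sum {X : Type} (I : X -> Prop) (f : X -> U) (s : U) : Prop :=
  (forall l, finite_sub I l -> fsum l f <> None) /\
  is_sup add (fun v => exists l, finite_sub I l /\ fsum l f = Some v) s.

Definition countable {X : Type} (A : X -> Prop) : Prop :=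
  exists h : X -> nat, forall x y, A x -> A y -> h x = h y -> x = y.

Definition supp {X : Type} (m : X -> U) : X -> Prop := fun x => m x <> zero.

Definition is_weight {X : Type} (m : X -> U) : Prop :=
  countable (supp m) /\ exists s, is_sum (supp m) m s.

Definition wadd {X : Type} (m1 m2 m : X -> U) : Prop :=
  forall x, add (m1 x) (m2 x) = Some (m x).

Definition lscale {X : Type} (u : U) (m : X -> U) : X -> U := fun x => mul u (m x).
Definition rscale {X : Type} (m : X -> U) (u : U) : X -> U := fun x => mul (m x) u.

Definition wle {X : Type} (m1 m2 : X -> U) : Prop :=
  exists m, is_weight m /\ wadd m1 m m2.

Definition eta {X : Type} (x : X) : X -> U :=
  fun y => if excluded_middle_informative (x = y) then one else zero.

(* Kleisli extension (relational, since + is partial):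
   bind f m m'  <->  m' = f^dagger(m) *)
Definition bind {X Y : Type} (f : X -> (Y -> U) -> Prop) (m : X -> U) (m' : Y -> U) : Prop :=
  exists g : X -> Y -> U,
    (forall x, supp m x -> f x (g x)) /\
    (forall y, is_sum (supp m) (fun x => mul (m x) (g x y)) (m' y)) /\
    is_weight m'.

Definition sumfam {T X : Type} (ms : T -> X -> U) (m : X -> U) : Prop :=
  (forall x, is_sum (fun _ : T => True) (fun t => ms t x) (m x)) /\ is_weight m.

End Weights.

Section Programs.
Variable S : PSemiring.
Variables (Sigma Act Tst : Type).
Variable asem : Act -> Sigma -> (Sigma -> car S).
Variable tsem : Tst -> Sigma -> bool.

Inductive bexp :=
| BTrue | BFalse | BOr (b1 b2 : bexp) | BAnd (b1 b2 : bexp) | BNot (b : bexp)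
| BTest (t : Tst).

Inductive exp := EB (b : bexp) | EU (u : car S).

Inductive cmd :=
| Skip | Seq (C1 C2 : cmd) | Plus (C1 C2 : cmd) | Assume (e : exp)
| Iter (C : cmd) (e e' : exp) | Atom (a : Act).

Fixpoint beval (b : bexp) (s : Sigma) : bool :=
  match b with
  | BTrue => true | BFalse => false
  | BOr b1 b2 => orb (beval b1 s) (beval b2 s)
  | BAnd b1 b2 => andb (beval b1 s) (beval b2 s)
  | BNot b => negb (beval b s)
  | BTest t => tsem t s
  end.

Definition eeval (e : exp) (s : Sigma) : car S :=
  match e with
  | EB b => if beval b s then pone S else pzero S
  | EU u => u
  end.

(* Phi(f)(s) = [[e]](s) . f^dagger([[C]](s)) + [[e']](s) . eta(s), relationally *)
Definition PhiR (semC : Sigma -> (Sigma -> car S) -> Prop) (e e' : exp)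
    (f : Sigma -> Sigma -> car S) (s : Sigma) (r : Sigma -> car S) : Prop :=
  exists mC b, semC s mC /\ bind (fun x m => m = f x) mC b /\
    wadd (lscale (eeval e s) b) (lscale (eeval e' s) (eta S s)) r /\ is_weight r.

Definition is_fix semC e e' (f : Sigma -> Sigma -> car S) : Prop :=
  (forall s, is_weight (f s)) /\ (forall s, PhiR semC e e' f s (f s)).

Definition is_lfp semC e e' (f : Sigma -> Sigma -> car S) : Prop :=
  is_fix semC e e' f /\
  forall g, is_fix semC e e' g -> forall s, wle (f s) (g s).

(* sem C s m  <->  [[C]](s) = m *)
Fixpoint sem (C : cmd) : Sigma -> (Sigma -> car S) -> Prop :=
  match C with
  | Skip => fun s m => m = eta S s
  | Seq C1 C2 => fun s m => exists m1, sem C1 s m1 /\ bind (sem C2) m1 m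
  | Plus C1 C2 => fun s m => exists m1 m2, sem C1 s m1 /\ sem C2 s m2 /\
                                 wadd m1 m2 m /\ is_weight m
  | Assume e => fun s m => m = lscale (eeval e s) (eta S s)
  | Iter C e e' => fun s m => exists f, is_lfp (sem C) e e' f /\ m = f s
  | Atom a => fun s m => m = asem a s
  end.

Definition well_formed (C : cmd) : Prop := forall s, exists m, sem C s m.

Definition asrt := (Sigma -> car S) -> Prop.

Definition asrtW (p : asrt) : Prop := forall m, p m -> is_weight m.
Definition Wall : asrt := fun m => is_weight m.
Definition aempty : asrt := fun _ => False.

Definition bigoplus {T : Type} (p : T -> asrt) : asrt :=
  fun m => exists ms : T -> Sigma -> car S, (forall t, p t (ms t)) /\ sumfam ms m.
Definition oplus (p q : asrt) : asrt :=
  fun m => exists m1 m2, p m1 /\ q m2 /\ wadd m1 m2 m /\ is_weight m.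
Definition aodot_l (u : car S) (p : asrt) : asrt :=
  fun m => exists m0, p m0 /\ m = lscale u m0.
Definition aodot_r (p : asrt) (u : car S) : asrt :=
  fun m => exists m0, p m0 /\ m = rscale m0 u.
Definition aunion {T : Type} (p : T -> asrt) : asrt := fun m => exists t, p t m.

Definition valid (p : asrt) (C : cmd) (q : asrt) : Prop :=
  forall m m', p m -> bind (sem C) m m' -> q m'.

Definition post (C : cmd) (p : asrt) : asrt :=
  fun m' => exists m, p m /\ bind (sem C) m m'.

Definition converges (ps : nat -> asrt) (pinf : asrt) : Prop :=
  forall (ms : nat -> Sigma -> car S) m,
    (forall n, ps n (ms n)) -> sumfam ms m -> pinf m.

Definition triples := asrt -> cmd -> asrt -> Prop.

Inductive derives (G : triples) : asrt -> cmd -> asrt -> Prop :=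
| d_ax : forall p C q, G p C q -> derives G p C q
| d_skip : forall p, asrtW p -> derives G p Skip p
| d_seq : forall p r q C1 C2, derives G p C1 r -> derives G r C2 q ->
    derives G p (Seq C1 C2) q
| d_plus : forall p q1 q2 C1 C2, derives G p C1 q1 -> derives G p C2 q2 ->
    derives G p (Plus C1 C2) (oplus q1 q2)
| d_assume : forall p e u, asrtW p ->
    (forall m s, p m -> supp m s -> eeval e s = u) ->
    derives G p (Assume e) (aodot_r p u)
| d_iter : forall (ps qs : nat -> asrt) qinf C e e', asrtW qinf ->
    converges qs qinf ->
    (forall n, derives G (ps n) (Seq (Assume e) C) (ps (Datatypes.S n))) ->
    (forall n, derives G (ps n) (Assume e') (qs n)) ->
    derives G (ps 0) (Iter C e e') qinf
| d_false : forall C q, asrtW q -> derives G aempty C q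
| d_true : forall p C, asrtW p -> derives G p C Wall
| d_scale : forall p C q u, derives G p C q ->
    derives G (aodot_l u p) C (aodot_l u q)
| d_disj : forall p1 p2 q1 q2 C, derives G p1 C q1 -> derives G p2 C q2 ->
    derives G (fun m => p1 m \/ p2 m) C (fun m => q1 m \/ q2 m)
| d_conj : forall p1 p2 q1 q2 C, derives G p1 C q1 -> derives G p2 C q2 ->
    derives G (fun m => p1 m /\ p2 m) C (fun m => q1 m /\ q2 m)
| d_choice : forall (T : Type) (p p' : T -> asrt) C,
    (forall t, derives G (p t) C (p' t)) ->
    derives G (bigoplus p) C (bigoplus p')
| d_exists : forall (T : Type) (p p' : T -> asrt) C,
    (forall t, derives G (p t) C (p' t)) ->
    derives G (aunion p) C (aunion p')
| d_conseq : forall p p' q q' C,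
    (forall m, p' m -> p m) -> derives G p C q -> (forall m, q m -> q' m) ->
    asrtW q' -> derives G p' C q'.

Definition Omega : triples :=
  fun p C q => (exists a, C = Atom a) /\ asrtW p /\ asrtW q /\ valid p C q.

End Programs.

(* Main.v *)
Require Import Defs.
From Stdlib Require Import List ClassicalEpsilon FunctionalExtensionality PropExtensionality Permutation Lia Arith.
Import ListNotations.
Set Implicit Arguments.
Unset Strict Implicit.


Section PCM.
Variable S : PSemiring.
Local Notation U := (car S).
Local Notation add := (@padd S).
Local Notation mul := (@pmul S).
Local Notation zero := (pzero S).
Local Notation one := (pone S).
Local Notation le := (nle (@padd S)).

Lemma add0l (a : U) : add zero a = Some a.
Proof. rewrite padd_comm. apply padd_0r. Qed.

Lemma le_refl (a : U) : le a a.
Proof. exists zero. apply padd_0r. Qed.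

Lemma le_trans (a b c : U) : le a b -> le b c -> le a c.
Proof.
  intros [w1 H1] [w2 H2].
  destruct (padd_assoc H1 H2) as [w [Hw1 Hw2]]. exists w; auto.
Qed.

Lemma zero_le (a : U) : le zero a.
Proof. exists a. apply add0l. Qed.

Lemma le_zero (a : U) : le a zero -> a = zero.
Proof. intro H. apply nle_antisym; auto using zero_le. Qed.

Lemma le_add_l (a b c : U) : add a b = Some c -> le a c.
Proof. intro H; exists b; auto. Qed.

Lemma le_add_r (a b c : U) : add a b = Some c -> le b c.
Proof. intro H; exists a; rewrite padd_comm; auto. Qed.

Lemma padd_assoc' (a b c bc abc : U) : add b c = Some bc -> add a bc = Some abc ->
  exists ab, add a b = Some ab /\ add ab c = Some abc.
Proof.
  intros H1 H2. rewrite padd_comm in H1, H2.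
  destruct (padd_assoc H1 H2) as [w [Hw1 Hw2]].
  exists w. rewrite padd_comm. rewrite padd_comm in Hw2. auto.
Qed.

Lemma add_mono_l (a a' b c' : U) : le a a' -> add a' b = Some c' ->
  exists c, add a b = Some c /\ le c c'.
Proof.
  intros [w Hw] H.
  destruct (padd_assoc Hw H) as [wb [H1 H2]].
  rewrite padd_comm in H1.
  destruct (padd_assoc' H1 H2) as [ab [H3 H4]].
  exists ab. split; auto. exists w; auto.
Qed.

Lemma add_mono (a a' b b' c' : U) : le a a' -> le b b' -> add a' b' = Some c' ->
  exists c, add a b = Some c /\ le c c'.
Proof.
  intros Ha Hb H.
  destruct (add_mono_l Ha H) as [c1 [H1 L1]].
  rewrite padd_comm in H1.
  destruct (add_mono_l Hb H1) as [c2 [H2 L2]].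
  exists c2. rewrite padd_comm. split; auto. eapply le_trans; eauto.
Qed.

Lemma add_mono_eq (a a' b b' c c' : U) : le a a' -> le b b' -> add a' b' = Some c' ->
  add a b = Some c -> le c c'.
Proof.
  intros Ha Hb H Hc. destruct (add_mono Ha Hb H) as [c0 [H0 L]].
  rewrite Hc in H0. injection H0; intros; subst; auto.
Qed.

Lemma mul_mono_l (u a b : U) : le a b -> le (mul u a) (mul u b).
Proof. intros [w Hw]. exists (mul u w). apply pmul_addr; auto. Qed.

Lemma mul_mono_r (u a b : U) : le a b -> le (mul a u) (mul b u).
Proof. intros [w Hw]. exists (mul w u). apply pmul_addl; auto. Qed.

Lemma one_zero_triv : one = zero -> forall a : U, a = zero.
Proof. intros H a. rewrite <- (pmul_1r a), H. apply pmul_0r. Qed.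

Lemma add_rearr (a b c d ab cd s : U) : add a b = Some ab -> add c d = Some cd ->
  add ab cd = Some s ->
  exists ac bd, add a c = Some ac /\ add b d = Some bd /\ add ac bd = Some s.
Proof.
  intros H1 H2 H3.
  destruct (padd_assoc H1 H3) as [bcd [H4 H5]].
  destruct (padd_assoc' H2 H4) as [bc [H6 H7]].
  rewrite padd_comm in H6.
  destruct (padd_assoc H6 H7) as [bd [H8 H9]].
  destruct (padd_assoc' H9 H5) as [ac [H10 H11]].
  exists ac, bd. auto.
Qed.

Lemma sup_unique (D : U -> Prop) s t : is_sup add D s -> is_sup add D t -> s = t.
Proof.
  intros [H1 H2] [H3 H4]. apply nle_antisym; auto.
Qed.

Lemma sup_ext (D D' : U -> Prop) s : is_sup add D s -> (forall u, D u <-> D' u) -> is_sup add D' s.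
Proof.
  intros [H1 H2] E. split.
  - intros d Hd. apply H1, E, Hd.
  - intros b Hb. apply H2. intros d Hd. apply Hb, E, Hd.
Qed.

Lemma sup_cofinal (D D' : U -> Prop) s : is_sup add D s ->
  (forall d, D d -> exists d', D' d' /\ le d d') -> (forall d', D' d' -> le d' s) ->
  is_sup add D' s.
Proof.
  intros [H1 H2] Hc Hu. split; auto.
  intros b Hb. apply H2. intros d Hd. destruct (Hc d Hd) as [d' [Hd' L]].
  eapply le_trans; eauto.
Qed.

Lemma sup_le (D : U -> Prop) s b : is_sup add D s -> (forall d, D d -> le d b) -> le s b.
Proof. intros [_ H] Hb. auto. Qed.

Lemma le_sup (D : U -> Prop) s d : is_sup add D s -> D d -> le d s.
Proof. intros [H _] Hd. auto. Qed.

End PCM.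


Definition notinb {X : Type} (l : list X) (x : X) : bool :=
  if excluded_middle_informative (In x l) then false else true.
Definition lunion {X : Type} (l1 l2 : list X) : list X := l1 ++ filter (notinb l1) l2.

Lemma lunion_NoDup {X : Type} (l1 l2 : list X) : NoDup l1 -> NoDup l2 -> NoDup (lunion l1 l2).
Proof.
  intros H1 H2. unfold lunion. apply NoDup_app; auto.
  - apply NoDup_filter; auto.
  - intros a Ha Hb. apply filter_In in Hb. destruct Hb as [_ Hb].
    unfold notinb in Hb. destruct (excluded_middle_informative (In a l1)); congruence.
Qed.

Lemma lunion_incl_l {X : Type} (l1 l2 : list X) : incl l1 (lunion l1 l2).
Proof. unfold lunion. intros a Ha. apply in_or_app; auto. Qed.

Lemma lunion_incl_r {X : Type} (l1 l2 : list X) : incl l2 (lunion l1 l2).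
Proof.
  unfold lunion. intros a Ha. apply in_or_app.
  destruct (excluded_middle_informative (In a l1)); auto.
  right. apply filter_In. split; auto. unfold notinb.
  destruct (excluded_middle_informative (In a l1)); tauto.
Qed.

Lemma lunion_in {X : Type} (l1 l2 : list X) x : In x (lunion l1 l2) -> In x l1 \/ In x l2.
Proof.
  unfold lunion. intro H. apply in_app_or in H. destruct H as [H|H]; auto.
  apply filter_In in H. tauto.
Qed.

Arguments lunion_incl_l {X} l1 l2.
Arguments lunion_incl_r {X} l1 l2.

Section FSum.
Variable S : PSemiring.
Local Notation U := (car S).
Local Notation add := (@padd S).
Local Notation mul := (@pmul S).
Local Notation zero := (pzero S).
Local Notation one := (pone S).
Local Notation le := (nle (@padd S)).
Local Notation fsum := (@fsum S _).

Lemma fsum_nil {X} (f : X -> U) : fsum [] f = Some zero.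
Proof. reflexivity. Qed.

Lemma fsum_cons_eq {X} (x : X) l f :
  fsum (x :: l) f = match fsum l f with Some s => add (f x) s | None => None end.
Proof. reflexivity. Qed.

Lemma fsum_cons {X} (x : X) l f v :
  fsum (x :: l) f = Some v <-> exists s, fsum l f = Some s /\ add (f x) s = Some v.
Proof.
  simpl. split.
  - destruct (fsum l f) as [s|]; intro H; [exists s; auto | discriminate].
  - intros [s [H1 H2]]. change (match fsum l f with Some s => add (f x) s | None => None end = Some v).
    rewrite H1. auto.
Qed.

Lemma fsum_ext {X} (l : list X) f g : (forall x, In x l -> f x = g x) -> fsum l f = fsum l g.
Proof.
  induction l as [|a l IH]; intro H; auto.
  rewrite !fsum_cons_eq. rewrite IH by (intros; apply H; simpl; auto).
  rewrite H by (simpl; auto). auto.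
Qed.

Lemma swap_add (a b s t v : U) : add b s = Some t -> add a t = Some v ->
  exists t', add a s = Some t' /\ add b t' = Some v.
Proof.
  intros H1 H2. destruct (padd_assoc' H1 H2) as [ab [H3 H4]].
  rewrite padd_comm in H3. destruct (padd_assoc H3 H4) as [t' [H5 H6]].
  exists t'; auto.
Qed.

Lemma fsum_perm {X} (l l' : list X) f : Permutation l l' -> fsum l f = fsum l' f.
Proof.
  intro P. induction P; auto.
  - rewrite !fsum_cons_eq. rewrite IHP. auto.
  - rewrite !fsum_cons_eq. destruct (fsum l f) as [s|]; auto.
    destruct (add (f x) s) as [t|] eqn:E1; destruct (add (f y) s) as [t'|] eqn:E2.
    + destruct (add (f y) t) as [v|] eqn:E3.
      * destruct (swap_add E1 E3) as [t'' [E4 E5]]. rewrite E2 in E4.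
        injection E4; intros; subst. auto.
      * destruct (add (f x) t') as [v|] eqn:E4; auto.
        destruct (swap_add E2 E4) as [t'' [E5 E6]]. rewrite E1 in E5.
        injection E5; intros; subst. congruence.
    + destruct (add (f y) t) as [v|] eqn:E3; auto.
      destruct (swap_add E1 E3) as [t'' [E4 E5]]. congruence.
    + destruct (add (f x) t') as [v|] eqn:E4; auto.
      destruct (swap_add E2 E4) as [t'' [E5 E6]]. congruence.
    + auto.
  - congruence.
Qed.

Lemma fsum_app {X} (l1 l2 : list X) f v :
  fsum (l1 ++ l2) f = Some v <->
  exists s1 s2, fsum l1 f = Some s1 /\ fsum l2 f = Some s2 /\ add s1 s2 = Some v.
Proof.
  revert v. induction l1 as [|x l1 IH]; intro v; simpl app.
  - split.
    + intro H. exists zero, v. repeat split; auto. apply add0l.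
    + intros [s1 [s2 [H1 [H2 H3]]]]. rewrite fsum_nil in H1. injection H1; intros; subst.
      rewrite add0l in H3. congruence.
  - rewrite fsum_cons. split.
    + intros [s [H1 H2]]. apply IH in H1. destruct H1 as [s1 [s2 [H3 [H4 H5]]]].
      destruct (padd_assoc' H5 H2) as [ab [H6 H7]].
      exists ab, s2. repeat split; auto. apply fsum_cons. eauto.
    + intros [s1 [s2 [H1 [H2 H3]]]]. apply fsum_cons in H1. destruct H1 as [s [H4 H5]].
      destruct (padd_assoc H5 H3) as [bc [H6 H7]].
      exists bc. split; auto. apply IH. eauto.
Qed.

Lemma fsum_same_set {X} (l l' : list X) f : NoDup l -> NoDup l' ->
  (forall x, In x l <-> In x l') -> fsum l f = fsum l' f.
Proof. intros. apply fsum_perm. apply NoDup_Permutation; auto. Qed.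

Lemma fsum_incl_le {X} (l1 l2 : list X) f s2 : NoDup l1 -> NoDup l2 -> incl l1 l2 ->
  fsum l2 f = Some s2 -> exists s1, fsum l1 f = Some s1 /\ le s1 s2.
Proof.
  intros N1 N2 I H.
  assert (E : fsum l2 f = fsum (lunion l1 l2) f).
  { apply fsum_same_set; auto. apply lunion_NoDup; auto.
    intro x; split; intro Hx.
    - apply lunion_incl_r; auto.
    - destruct (lunion_in Hx); auto. }
  rewrite E in H. unfold lunion in H. apply fsum_app in H.
  destruct H as [a [b [H1 [H2 H3]]]]. exists a. split; auto. eapply le_add_l; eauto.
Qed.

Lemma fsum_mono_f {X} (l : list X) f g t : (forall x, In x l -> le (f x) (g x)) ->
  fsum l g = Some t -> exists s, fsum l f = Some s /\ le s t.
Proof.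
  revert t. induction l as [|a l IH]; intros t Hle H.
  - exists zero. rewrite fsum_nil in H. injection H; intros; subst. split; auto. apply le_refl.
  - apply fsum_cons in H. destruct H as [s [H1 H2]].
    destruct (IH s) as [s' [H3 H4]]; auto. intros; apply Hle; simpl; auto.
    destruct (add_mono (Hle a (or_introl eq_refl)) H4 H2) as [c [H5 H6]].
    exists c. split; auto. apply fsum_cons. eauto.
Qed.

Lemma fsum_add {X} (l : list X) f g h a b c :
  (forall x, In x l -> add (f x) (g x) = Some (h x)) ->
  fsum l f = Some a -> fsum l g = Some b -> add a b = Some c -> fsum l h = Some c.
Proof.
  revert a b c. induction l as [|x l IH]; intros a b c Hp Hf Hg Hc.
  - rewrite fsum_nil in *. injection Hf; injection Hg; intros; subst.
    rewrite add0l in Hc. congruence.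
  - apply fsum_cons in Hf. apply fsum_cons in Hg.
    destruct Hf as [sa [Ha1 Ha2]]. destruct Hg as [sb [Hb1 Hb2]].
    destruct (add_rearr Ha2 Hb2 Hc) as [ac [bd [H1 [H2 H3]]]].
    apply fsum_cons. exists bd. split.
    + eapply IH; eauto. intros; apply Hp; simpl; auto.
    + rewrite Hp in H1 by (simpl; auto). injection H1; intros; subst; auto.
Qed.

Lemma fsum_add_inv {X} (l : list X) f g h c :
  (forall x, In x l -> add (f x) (g x) = Some (h x)) ->
  fsum l h = Some c -> exists a b, fsum l f = Some a /\ fsum l g = Some b /\ add a b = Some c.
Proof.
  revert c. induction l as [|x l IH]; intros c Hp Hh.
  - exists zero, zero. rewrite fsum_nil in *. injection Hh; intros; subst.
    repeat split; auto. apply padd_0r.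
  - apply fsum_cons in Hh. destruct Hh as [s [H1 H2]].
    destruct (IH s) as [a [b [H3 [H4 H5]]]]; auto. intros; apply Hp; simpl; auto.

    assert (Hfx : add (f x) (g x) = Some (h x)) by (apply Hp; simpl; auto).
    destruct (add_rearr Hfx H5 H2) as [ac [bd [H6 [H7 H8]]]].
    exists ac, bd. repeat split; auto; apply fsum_cons; eauto.
Qed.

Lemma fsum_scale_l {X} (l : list X) f u s : fsum l f = Some s ->
  fsum l (fun x => mul u (f x)) = Some (mul u s).
Proof.
  revert s. induction l as [|x l IH]; intros s H.
  - rewrite fsum_nil in *. injection H; intros; subst. rewrite pmul_0r. auto.
  - apply fsum_cons in H. destruct H as [t [H1 H2]]. apply fsum_cons.
    exists (mul u t). split; auto. apply pmul_addr; auto.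
Qed.

Lemma fsum_scale_r {X} (l : list X) f u s : fsum l f = Some s ->
  fsum l (fun x => mul (f x) u) = Some (mul s u).
Proof.
  revert s. induction l as [|x l IH]; intros s H.
  - rewrite fsum_nil in *. injection H; intros; subst. rewrite pmul_0l. auto.
  - apply fsum_cons in H. destruct H as [t [H1 H2]]. apply fsum_cons.
    exists (mul t u). split; auto. apply pmul_addl; auto.
Qed.

Lemma fsum_zero {X} (l : list X) f : (forall x, In x l -> f x = zero) -> fsum l f = Some zero.
Proof.
  induction l as [|x l IH]; intro H; auto.
  apply fsum_cons. exists zero. split. apply IH; intros; apply H; simpl; auto.
  rewrite H by (simpl; auto). apply padd_0r.
Qed.

Lemma fsum_single {X} (l : list X) f x0 : NoDup l ->
  (forall x, In x l -> x <> x0 -> f x = zero) ->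
  fsum l f = Some (if excluded_middle_informative (In x0 l) then f x0 else zero).
Proof.
  induction l as [|x l IH]; intros N H.
  - simpl. destruct (excluded_middle_informative False); [contradiction|auto].
  - inversion N; subst. apply fsum_cons.
    destruct (excluded_middle_informative (x = x0)) as [E|E].
    + subst. exists zero. split.
      * apply fsum_zero. intros y Hy. apply H; simpl; auto. intro; subst; contradiction.
      * destruct (excluded_middle_informative (In x0 (x0 :: l))) as [_|F];
          [apply padd_0r | exfalso; apply F; simpl; auto].
    + exists (if excluded_middle_informative (In x0 l) then f x0 else zero). split.
      * apply IH; auto. intros; apply H; simpl; auto.
      * rewrite H by (simpl; auto). rewrite add0l.
        destruct (excluded_middle_informative (In x0 l));
        destruct (excluded_middle_informative (In x0 (x :: l))); auto.
        -- exfalso; apply n; simpl; auto.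
        -- exfalso. destruct i; auto.
Qed.

Lemma fsum_one {X} (x : X) f : fsum [x] f = Some (f x).
Proof. apply fsum_cons. exists zero. split; auto. apply padd_0r. Qed.

Lemma fsum_elem_le {X} (l : list X) f y s : NoDup l -> In y l -> fsum l f = Some s -> le (f y) s.
Proof.
  intros N I H. destruct (@fsum_incl_le X [y] l f s) as [s1 [H1 H2]]; auto.
  constructor; auto. constructor. intros z Hz; destruct Hz as [<-|[]]; auto.
  rewrite fsum_one in H1. injection H1; intros; subst; auto.
Qed.

Definition dflt (o : option U) : U := match o with Some v => v | None => zero end.

Lemma fsum_swap {X Y} (lx : list X) (ly : list Y) (a : X -> Y -> U) r R : NoDup ly ->
  (forall x, In x lx -> fsum ly (a x) = Some (r x)) -> fsum lx r = Some R ->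
  exists c, (forall y, In y ly -> fsum lx (fun x => a x y) = Some (c y)) /\ fsum ly c = Some R.
Proof.
  intro N. revert R. induction lx as [|x lx IH]; intros R Hr HR.
  - exists (fun _ => zero). split.
    + intros; apply fsum_nil.
    + rewrite fsum_nil in HR. injection HR; intros; subst. apply fsum_zero; auto.
  - apply fsum_cons in HR. destruct HR as [s [H1 H2]].
    destruct (IH s) as [c [Hc1 Hc2]]; auto. intros; apply Hr; simpl; auto.
    assert (Hax : fsum ly (a x) = Some (r x)) by (apply Hr; simpl; auto).
    assert (Hd : forall y, In y ly -> add (a x y) (c y) = Some (dflt (add (a x y) (c y)))).
    { intros y Hy.
      destruct (add_mono (fsum_elem_le N Hy Hax) (fsum_elem_le N Hy Hc2) H2) as [v [Hv _]].
      rewrite Hv. auto. }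
    exists (fun y => dflt (add (a x y) (c y))). split.
    + intros y Hy. apply fsum_cons. exists (c y). split; auto.
    + eapply fsum_add; eauto.
Qed.

End FSum.


Section Sums.
Variable S : PSemiring.
Local Notation U := (car S).
Local Notation add := (@padd S).
Local Notation mul := (@pmul S).
Local Notation zero := (pzero S).
Local Notation one := (pone S).
Local Notation le := (nle (@padd S)).
Local Notation fsum := (@fsum S _).
Local Notation is_sum := (@is_sum S _).
Local Notation finite_sub := (@finite_sub _).

Definition psums {X} (I : X -> Prop) (f : X -> U) : U -> Prop :=
  fun v => exists l, finite_sub I l /\ fsum l f = Some v.

Lemma is_sum_le {X} (I : X -> Prop) f s l : is_sum I f s -> finite_sub I l ->
  exists v, fsum l f = Some v /\ le v s.
Proof.
  intros [H1 H2] Hl. destruct (fsum l f) as [v|] eqn:E.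
  - exists v. split; auto. apply H2. exists l; auto.
  - exfalso. apply (H1 l Hl E).
Qed.

Lemma is_sum_least {X} (I : X -> Prop) f s b : is_sum I f s ->
  (forall l v, finite_sub I l -> fsum l f = Some v -> le v b) -> le s b.
Proof.
  intros [H1 H2] Hb. apply H2. intros d [l [Hl Hd]]. eauto.
Qed.

Lemma is_sum_intro {X} (I : X -> Prop) f s :
  (forall l, finite_sub I l -> exists v, fsum l f = Some v /\ le v s) ->
  (forall b, (forall l v, finite_sub I l -> fsum l f = Some v -> le v b) -> le s b) ->
  is_sum I f s.
Proof.
  intros H1 H2. split.
  - intros l Hl E. destruct (H1 l Hl) as [v [Hv _]]. congruence.
  - split.
    + intros d [l [Hl Hd]]. destruct (H1 l Hl) as [v [Hv L]]. congruence.
    + intros b Hb. apply H2. intros l v Hl Hv. apply Hb. exists l; auto.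
Qed.

Lemma is_sum_unique {X} (I : X -> Prop) f s t : is_sum I f s -> is_sum I f t -> s = t.
Proof. intros [_ H1] [_ H2]. eapply sup_unique; eauto. Qed.

Lemma is_sum_ext {X} (I : X -> Prop) f g s : (forall x, I x -> f x = g x) ->
  is_sum I f s -> is_sum I g s.
Proof.
  intros E H. apply is_sum_intro.
  - intros l Hl. destruct (is_sum_le H Hl) as [v [Hv L]]. exists v. split; auto.
    rewrite <- Hv. symmetry. apply fsum_ext. intros; apply E, Hl; auto.
  - intros b Hb. apply (is_sum_least H). intros l v Hl Hv. apply (Hb l v Hl).
    rewrite <- Hv. apply fsum_ext. intros; symmetry; apply E, Hl; auto.
Qed.

Lemma finite_sub_union {X} (I : X -> Prop) l1 l2 : finite_sub I l1 -> finite_sub I l2 ->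
  finite_sub I (lunion l1 l2).
Proof.
  intros [N1 H1] [N2 H2]. split. apply lunion_NoDup; auto.
  intros x Hx. destruct (lunion_in Hx); auto.
Qed.

Lemma finite_sub_nil {X} (I : X -> Prop) : finite_sub I [].
Proof. split. constructor. intros x []. Qed.

Lemma psums_directed {X} (I : X -> Prop) f :
  (forall l, finite_sub I l -> fsum l f <> None) -> directed add (psums I f).
Proof.
  intro H. split.
  - exists zero. exists []. split; auto using finite_sub_nil.
  - intros x y [l1 [Hl1 Hx]] [l2 [Hl2 Hy]].
    pose proof (finite_sub_union Hl1 Hl2) as Hl3.
    destruct (fsum (lunion l1 l2) f) as [z|] eqn:E; [|exfalso; eapply H; eauto].
    exists z. split. exists (lunion l1 l2); auto.
    destruct Hl1, Hl2, Hl3.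
    split.
    + destruct (fsum_incl_le (l1:=l1) H0 H4 (lunion_incl_l l1 l2) E) as [s1 [E1 L]].
      congruence.
    + destruct (fsum_incl_le (l1:=l2) H2 H4 (lunion_incl_r l1 l2) E) as [s1 [E1 L]].
      congruence.
Qed.

Lemma is_sum_exists_bounded {X} (I : X -> Prop) f B :
  (forall l, finite_sub I l -> exists v, fsum l f = Some v /\ le v B) ->
  exists s, is_sum I f s /\ le s B.
Proof.
  intro H.
  assert (Hd : forall l, finite_sub I l -> fsum l f <> None).
  { intros l Hl E. destruct (H l Hl) as [v [Hv _]]. congruence. }
  destruct (dir_sup (psums_directed Hd)) as [s Hs].
  exists s. split.
  - split; auto.
  - apply (sup_le Hs). intros d [l [Hl Hv]]. destruct (H l Hl) as [v [Hv' L]]. congruence.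
Qed.

Lemma is_sum_mono {X} (I : X -> Prop) f g t : (forall x, I x -> le (f x) (g x)) ->
  is_sum I g t -> exists s, is_sum I f s /\ le s t.
Proof.
  intros Hle H. apply is_sum_exists_bounded. intros l Hl.
  destruct (is_sum_le H Hl) as [v [Hv L]].
  destruct (fsum_mono_f (f:=f) (l:=l) (g:=g) (t:=v)) as [s [Hs Ls]]; auto.
  intros; apply Hle, Hl; auto.
  exists s; split; auto. eapply le_trans; eauto.
Qed.

Lemma is_sum_mono_le {X} (I : X -> Prop) f g s t : (forall x, I x -> le (f x) (g x)) ->
  is_sum I f s -> is_sum I g t -> le s t.
Proof.
  intros Hle Hf Hg. destruct (is_sum_mono Hle Hg) as [s' [Hs' L]].
  rewrite (is_sum_unique Hf Hs'). auto.
Qed.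

Definition pb {X} (P : X -> Prop) (x : X) : bool :=
  if excluded_middle_informative (P x) then true else false.

Lemma fsum_filter_zero {X} (P : X -> Prop) l f : (forall x, In x l -> ~ P x -> f x = zero) ->
  fsum l f = fsum (filter (pb P) l) f.
Proof.
  induction l as [|x l IH]; intro H; auto.
  change (filter (pb P) (x :: l)) with (if pb P x then x :: filter (pb P) l else filter (pb P) l).
  unfold pb at 1. destruct (excluded_middle_informative (P x)) as [p|p].
  - rewrite !fsum_cons_eq. rewrite IH; auto. intros; apply H; simpl; auto.
  - rewrite fsum_cons_eq. rewrite <- IH by (intros; apply H; simpl; auto).
    rewrite H by (simpl; auto). destruct (fsum l f); auto. apply add0l.
Qed.

Lemma is_sum_restrict {X} (I J : X -> Prop) f s : (forall x, I x -> J x) ->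
  (forall x, J x -> ~ I x -> f x = zero) -> (is_sum J f s <-> is_sum I f s).
Proof.
  intros HIJ Hz.
  assert (Hf : forall l, finite_sub J l -> finite_sub I (filter (pb I) l) /\
            fsum l f = fsum (filter (pb I) l) f).
  { intros l [N Hl]. split.
    - split. apply NoDup_filter; auto. intros x Hx. apply filter_In in Hx.
      destruct Hx as [_ Hx]. unfold pb in Hx. destruct (excluded_middle_informative (I x)); congruence.
    - apply fsum_filter_zero. intros; apply Hz; auto. }
  assert (Hg : forall l, finite_sub I l -> finite_sub J l).
  { intros l [N Hl]; split; auto. }
  split; intro H.
  - apply is_sum_intro.
    + intros l Hl. apply (is_sum_le H (Hg l Hl)).
    + intros b Hb. apply (is_sum_least H). intros l v Hl Hv.
      destruct (Hf l Hl) as [H1 H2]. apply (Hb _ v H1). congruence.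
  - apply is_sum_intro.
    + intros l Hl. destruct (Hf l Hl) as [H1 H2]. rewrite H2. apply (is_sum_le H H1).
    + intros b Hb. apply (is_sum_least H). intros l v Hl Hv. apply (Hb l v (Hg l Hl) Hv).
Qed.

Lemma is_sum_single {X} (I : X -> Prop) f x0 : (forall x, I x -> x <> x0 -> f x = zero) ->
  (I x0 \/ f x0 = zero) -> is_sum I f (f x0).
Proof.
  intros Hz Hx0. apply is_sum_intro.
  - intros l [N Hl]. rewrite (fsum_single (x0:=x0)); [|auto|intros; apply Hz; auto].
    eexists; split; eauto. destruct (excluded_middle_informative (In x0 l)).
    apply le_refl. apply zero_le.
  - intros b Hb. destruct Hx0 as [Hx0|Hx0].
    + apply (Hb [x0]). split. constructor; auto. constructor. intros x [<-|[]]; auto.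
      apply fsum_one.
    + rewrite Hx0. apply zero_le.
Qed.

Lemma is_sum_empty {X} (I : X -> Prop) f s : (forall x, ~ I x) -> (is_sum I f s <-> s = zero).
Proof.
  intro He.
  assert (Hnil : forall l, finite_sub I l -> l = []).
  { intros [|x l] [_ H]; auto. exfalso. apply (He x), H. simpl; auto. }
  assert (H0 : is_sum I f zero).
  { apply is_sum_intro.
    - intros l Hl. rewrite (Hnil l Hl). exists zero. split. apply fsum_nil. apply le_refl.
    - intros b Hb. apply (Hb []). apply finite_sub_nil. apply fsum_nil. }
  split; intro H.
  - eapply is_sum_unique; eauto.
  - subst; auto.
Qed.

Lemma is_sum_defined {X} (I : X -> Prop) f s : is_sum I f s ->
  forall l, finite_sub I l -> fsum l f <> None.
Proof. intros [H _]; auto. Qed.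

Lemma is_sum_sup {X} (I : X -> Prop) f s : is_sum I f s -> is_sup add (psums I f) s.
Proof. intros [_ H]; auto. Qed.

Lemma is_sum_scale_l {X} (I : X -> Prop) f s u : is_sum I f s ->
  is_sum I (fun x => mul u (f x)) (mul u s).
Proof.
  intro H. pose proof (pmul_contl u (psums_directed (is_sum_defined H)) (is_sum_sup H)) as Hc.
  split.
  - intros l Hl. destruct (is_sum_le H Hl) as [v [Hv _]].
    rewrite (fsum_scale_l u Hv). discriminate.
  - eapply sup_ext; eauto. intro w. split.
    + intros [d [[l [Hl Hd]] ->]]. exists l. split; auto. apply fsum_scale_l; auto.
    + intros [l [Hl Hw]]. destruct (is_sum_le H Hl) as [v [Hv _]].
      exists v. split. exists l; auto. rewrite (fsum_scale_l u Hv) in Hw. congruence.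
Qed.

Lemma is_sum_scale_r {X} (I : X -> Prop) f s u : is_sum I f s ->
  is_sum I (fun x => mul (f x) u) (mul s u).
Proof.
  intro H. pose proof (pmul_contr u (psums_directed (is_sum_defined H)) (is_sum_sup H)) as Hc.
  split.
  - intros l Hl. destruct (is_sum_le H Hl) as [v [Hv _]].
    rewrite (fsum_scale_r u Hv). discriminate.
  - eapply sup_ext; eauto. intro w. split.
    + intros [d [[l [Hl Hd]] ->]]. exists l. split; auto. apply fsum_scale_r; auto.
    + intros [l [Hl Hw]]. destruct (is_sum_le H Hl) as [v [Hv _]].
      exists v. split. exists l; auto. rewrite (fsum_scale_r u Hv) in Hw. congruence.
Qed.

Lemma add_sup_le (D1 D2 : U -> Prop) s1 s2 c b : directed add D1 -> directed add D2 ->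
  is_sup add D1 s1 -> is_sup add D2 s2 -> add s1 s2 = Some c ->
  (forall d1 d2, D1 d1 -> D2 d2 -> exists v, add d1 d2 = Some v /\ le v b) -> le c b.
Proof.
  intros Dir1 Dir2 S1 S2 Hc H.
  assert (A1 : forall d1, D1 d1 -> exists v, add d1 s2 = Some v /\ le v b).
  { intros d1 Hd1.
    destruct (padd_cont (a:=d1) Dir2 S2) as [v [Hv Sv]].
    { intros d Hd. destruct (H d1 d Hd1 Hd) as [v [Hv _]]. eauto. }
    exists v. split; auto. apply (sup_le Sv). intros w [d [Hd Hw]].
    destruct (H d1 d Hd1 Hd) as [v' [Hv' L]]. congruence. }
  destruct (padd_cont (a:=s2) Dir1 S1) as [v [Hv Sv]].
  { intros d Hd. destruct (A1 d Hd) as [v [Hv _]]. rewrite padd_comm. eauto. }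
  rewrite padd_comm in Hv. rewrite Hc in Hv. injection Hv; intros; subst.
  apply (sup_le Sv). intros w [d [Hd Hw]]. destruct (A1 d Hd) as [v' [Hv' L]].
  rewrite padd_comm in Hw. congruence.
Qed.

Lemma is_sum_add {X} (I : X -> Prop) f g h a b c : is_sum I f a -> is_sum I g b ->
  add a b = Some c -> (forall x, I x -> add (f x) (g x) = Some (h x)) -> is_sum I h c.
Proof.
  intros Hf Hg Hc Hp. apply is_sum_intro.
  - intros l Hl. destruct (is_sum_le Hf Hl) as [va [Ha La]].
    destruct (is_sum_le Hg Hl) as [vb [Hb Lb]].
    destruct (add_mono La Lb Hc) as [v [Hv L]].
    exists v; split; auto. eapply (fsum_add (f:=f) (g:=g)); eauto. intros; apply Hp, Hl; auto.
  - intros b' Hb'.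
    apply (add_sup_le (psums_directed (is_sum_defined Hf)) (psums_directed (is_sum_defined Hg))
             (is_sum_sup Hf) (is_sum_sup Hg) Hc).
    intros d1 d2 [l1 [Hl1 H1]] [l2 [Hl2 H2]].
    pose proof (finite_sub_union Hl1 Hl2) as Hl3.
    destruct (is_sum_le Hf Hl3) as [va [Ha La]].
    destruct (is_sum_le Hg Hl3) as [vb [Hb Lb]].
    destruct (add_mono La Lb Hc) as [v [Hv L]].
    destruct Hl1 as [N1 _], Hl2 as [N2 _], Hl3 as [N3 HH3].
    destruct (fsum_incl_le (l1:=l1) N1 N3 (lunion_incl_l l1 l2) Ha) as [s1 [E1 L1]].
    destruct (fsum_incl_le (l1:=l2) N2 N3 (lunion_incl_r l1 l2) Hb) as [s2 [E2 L2]].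
    rewrite E1 in H1; rewrite E2 in H2. injection H1; injection H2; intros; subst.
    destruct (add_mono L1 L2 Hv) as [w [Hw Lw]]. exists w. split; auto.
    eapply le_trans; [exact Lw|]. apply (Hb' (lunion l1 l2)). split; auto.
    eapply (fsum_add (f:=f) (g:=g)); eauto.
Qed.

End Sums.


Lemma nat_bound (l : list nat) : exists N, forall n, In n l -> n < N.
Proof.
  induction l as [|x l [N HN]].
  - exists 0. intros n [].
  - exists (S (Nat.max x N)). intros n [<-|H]. lia. specialize (HN n H). lia.
Qed.

Lemma nat_bound_f {Y} (l : list Y) (g : Y -> nat) : exists N, forall y, In y l -> g y <= N.
Proof.
  induction l as [|x l [N HN]].
  - exists 0. intros n [].
  - exists (Nat.max (g x) N). intros y [<-|H]. lia. specialize (HN y H). lia.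
Qed.

Section Fub.
Variable S : PSemiring.
Local Notation U := (car S).
Local Notation add := (@padd S).
Local Notation mul := (@pmul S).
Local Notation zero := (pzero S).
Local Notation one := (pone S).
Local Notation le := (nle (@padd S)).
Local Notation fsum := (@fsum S _).
Local Notation is_sum := (@is_sum S _).
Local Notation finite_sub := (@finite_sub _).

Definition upd {Y} (ch : Y -> U) (y : Y) (d : U) : Y -> U :=
  fun y' => if excluded_middle_informative (y' = y) then d else ch y'.

Lemma fc_gen {Y} (D : Y -> U -> Prop) (c : Y -> U) (l : list Y) : NoDup l ->
  (forall y, In y l -> directed add (D y) /\ is_sup add (D y) (c y)) ->
  forall w b, (forall ch, (forall y, In y l -> D y (ch y)) ->
     exists z v, fsum l ch = Some z /\ add w z = Some v /\ le v b) ->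
  exists z v, fsum l c = Some z /\ add w z = Some v /\ le v b.
Proof.
  induction l as [|y l IH]; intros N Hd w b H.
  - apply H. intros y [].
  - inversion N as [|? ? Ny Nl]; subst.
    set (ch0 := fun y' => epsilon (inhabits zero) (D y')).
    assert (Hch0 : forall y', In y' (y :: l) -> D y' (ch0 y')).
    { intros y' Hy'. unfold ch0. apply epsilon_spec. apply (Hd y' Hy'). }
    assert (Hupd : forall ch d, fsum l (upd ch y d) = fsum l ch).
    { intros ch d. apply fsum_ext. intros x Hx. unfold upd.
      destruct (excluded_middle_informative (x = y)); auto. subst; contradiction. }
    assert (Hupd2 : forall ch d, D y d -> (forall y', In y' l -> D y' (ch y')) ->
               forall y', In y' (y :: l) -> D y' (upd ch y d y')).
    { intros ch d Hdd Hc y' [<-|Hy']; unfold upd.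
      - destruct (excluded_middle_informative (y = y)); [auto|congruence].
      - destruct (excluded_middle_informative (y' = y)); [subst; auto|auto]. }
    assert (A : forall d, D y d -> exists wd, add w d = Some wd /\
               exists z v, fsum l c = Some z /\ add wd z = Some v /\ le v b).
    { intros d Hdd.
      destruct (H (upd ch0 y d)) as [z [v [E1 [E2 E3]]]].
      { apply Hupd2; auto. intros; apply Hch0; simpl; auto. }
      apply fsum_cons in E1. destruct E1 as [s [E4 E5]].
      unfold upd at 1 in E5. destruct (excluded_middle_informative (y = y)); [|congruence].
      destruct (padd_assoc' E5 E2) as [wd [E6 E7]].
      exists wd. split; auto.
      apply IH; auto. intros; apply Hd; simpl; auto.
      intros ch Hc. destruct (H (upd ch y d)) as [z' [v' [F1 [F2 F3]]]].
      { apply Hupd2; auto. }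
      apply fsum_cons in F1. destruct F1 as [s' [F4 F5]].
      unfold upd at 1 in F5. destruct (excluded_middle_informative (y = y)); [|congruence].
      rewrite Hupd in F4.
      destruct (padd_assoc' F5 F2) as [wd' [F6 F7]]. rewrite E6 in F6.
      injection F6; intros; subst. exists s', v'. auto. }
    destruct (Hd y (or_introl eq_refl)) as [[[d0 Hd0] _] Hsup].
    destruct (A d0 Hd0) as [wd0 [G1 [Zc [v0 [G2 [G3 G4]]]]]].
    rewrite padd_comm in G1.
    destruct (padd_assoc G1 G3) as [wz [G5 G6]].
    assert (B : forall d, D y d -> exists v, add wz d = Some v /\ le v b).
    { intros d Hdd. destruct (A d Hdd) as [wd [K1 [Zc' [v [K2 [K3 K4]]]]]].
      rewrite G2 in K2. injection K2; intros; subst.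
      rewrite padd_comm in K1. destruct (padd_assoc K1 K3) as [wz' [K5 K6]].
      rewrite G5 in K5. injection K5; intros; subst. exists v. rewrite padd_comm. auto. }
    destruct (padd_cont (a:=wz) (proj1 (Hd y (or_introl eq_refl))) Hsup) as [V [HV SV]].
    { intros d Hdd. destruct (B d Hdd) as [v [Hv _]]. eauto. }
    assert (LV : le V b).
    { apply (sup_le SV). intros u [d [Hdd Hu]]. destruct (B d Hdd) as [v [Hv L]]. congruence. }
    destruct (padd_assoc G5 HV) as [t [T1 T2]].
    exists t, V. repeat split; auto. apply fsum_cons. exists Zc. split; auto.
    rewrite padd_comm; auto.
Qed.

Lemma big_union {X Y} (I : X -> Prop) (ly : list Y) (L : Y -> list X) :
  (forall y, In y ly -> finite_sub I (L y)) ->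
  exists lx, finite_sub I lx /\ forall y, In y ly -> incl (L y) lx.
Proof.
  induction ly as [|y ly IH]; intro H.
  - exists []. split. apply finite_sub_nil. intros y [].
  - destruct IH as [lx [Hlx Hin]]. intros; apply H; simpl; auto.
    exists (lunion (L y) lx). split.
    + apply finite_sub_union; auto. apply H; simpl; auto.
    + intros y' [<-|Hy'].
      * apply lunion_incl_l.
      * intros x Hx. apply lunion_incl_r. apply (Hin y' Hy'); auto.
Qed.

Lemma is_sum_elem_le {X} (I : X -> Prop) f s x : is_sum I f s -> I x -> le (f x) s.
Proof.
  intros H Hx. destruct (is_sum_le (l:=[x]) H) as [v [Hv L]].
  split. constructor. intros []. constructor. intros y [<-|[]]; auto.
  rewrite fsum_one in Hv. injection Hv; intros; subst; auto.
Qed.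

Lemma fubini {X Y} (I : X -> Prop) (J : Y -> Prop) (a : X -> Y -> U) r R :
  (forall x, I x -> is_sum J (a x) (r x)) -> is_sum I r R ->
  exists c, (forall y, J y -> is_sum I (fun x => a x y) (c y)) /\ is_sum J c R.
Proof.
  intros Hr HR.
  set (c := fun y => epsilon (inhabits zero) (is_sum I (fun x => a x y))).
  assert (Hc : forall y, J y -> is_sum I (fun x => a x y) (c y)).
  { intros y Hy. unfold c. apply epsilon_spec.
    destruct (is_sum_mono (f:=fun x => a x y) (g:=r) (I:=I) (t:=R)) as [s [Hs _]]; eauto.
    intros x Hx. apply (is_sum_elem_le (Hr x Hx) Hy). }
  exists c. split; auto.
  assert (PA : forall ly, finite_sub J ly -> exists z, fsum ly c = Some z /\ le z R).
  { intros ly [Nly Hly].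
    destruct (@fc_gen Y (fun y => psums I (fun x => a x y)) c ly Nly) with (w := zero) (b := R)
      as [z [v [E1 [E2 E3]]]].
    - intros y Hy. split. apply psums_directed, (is_sum_defined (Hc y (Hly y Hy))).
      apply is_sum_sup, Hc, Hly; auto.
    - intros ch Hch.
      set (L := fun y => epsilon (inhabits (@nil X))
                  (fun lx => finite_sub I lx /\ fsum lx (fun x => a x y) = Some (ch y))).
      assert (HL : forall y, In y ly -> finite_sub I (L y) /\
                     fsum (L y) (fun x => a x y) = Some (ch y)).
      { intros y Hy. unfold L. apply epsilon_spec. apply Hch; auto. }
      destruct (big_union (I:=I) (ly:=ly) (L:=L)) as [lx [Hlx Hinc]].
      { intros; apply HL; auto. }
      set (r' := fun x => dflt (fsum ly (a x))).
      assert (Hr' : forall x, In x lx -> fsum ly (a x) = Some (r' x) /\ le (r' x) (r x)).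
      { intros x Hx. destruct (is_sum_le (l:=ly) (Hr x (proj2 Hlx x Hx)) (conj Nly Hly)) as [v [Hv Lv]].
        unfold r'. rewrite Hv. simpl. auto. }
      destruct (is_sum_le HR Hlx) as [T1 [HT1 LT1]].
      destruct (fsum_mono_f (l:=lx) (f:=r') (g:=r) (t:=T1)) as [T0 [HT0 LT0]]; auto.
      { intros; apply Hr'; auto. }
      destruct (fsum_swap (lx:=lx) (ly:=ly) (a:=a) (r:=r') (R:=T0) Nly) as [c' [Hc'1 Hc'2]]; eauto.
      { intros; apply Hr'; auto. }
      destruct (fsum_mono_f (l:=ly) (f:=ch) (g:=c') (t:=T0)) as [z [Hz Lz]]; auto.
      { intros y Hy. destruct (HL y Hy) as [[NL HL1] HL2].
        destruct (fsum_incl_le (l1:=L y) (l2:=lx) (f:=fun x => a x y) NL (proj1 Hlx) (Hinc y Hy) (Hc'1 y Hy))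
          as [s1 [Hs1 Ls1]]. congruence. }
      exists z, z. repeat split; auto. apply add0l.
      eapply le_trans; [exact Lz|]. eapply le_trans; eauto.
    - exists z. split; auto. rewrite add0l in E2. congruence. }
  apply is_sum_intro; auto.
  intros b Hb. apply (is_sum_least HR). intros lx v [Nlx Hlx] Hv.
  destruct (@fc_gen X (fun x => psums J (a x)) r lx Nlx) with (w := zero) (b := b)
    as [z [v' [E1 [E2 E3]]]].
  - intros x Hx. split. apply psums_directed, (is_sum_defined (Hr x (Hlx x Hx))).
    apply is_sum_sup, Hr, Hlx; auto.
  - intros ch Hch.
    set (L := fun x => epsilon (inhabits (@nil Y))
                (fun ly => finite_sub J ly /\ fsum ly (a x) = Some (ch x))).
    assert (HL : forall x, In x lx -> finite_sub J (L x) /\ fsum (L x) (a x) = Some (ch x)).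
    { intros x Hx. unfold L. apply epsilon_spec. apply Hch; auto. }
    destruct (big_union (I:=J) (ly:=lx) (L:=L)) as [ly [Hly Hinc]].
    { intros; apply HL; auto. }
    set (s := fun y => dflt (fsum lx (fun x => a x y))).
    assert (Hs : forall y, In y ly -> fsum lx (fun x => a x y) = Some (s y) /\ le (s y) (c y)).
    { intros y Hy. destruct (is_sum_le (l:=lx) (Hc y (proj2 Hly y Hy)) (conj Nlx Hlx)) as [v0 [Hv0 Lv0]].
      unfold s; rewrite Hv0; simpl; auto. }
    destruct (PA ly Hly) as [Tc [HTc LTc]].
    destruct (fsum_mono_f (l:=ly) (f:=s) (g:=c) (t:=Tc)) as [T0 [HT0 LT0]]; auto.
    { intros; apply Hs; auto. }
    destruct (fsum_swap (lx:=ly) (ly:=lx) (a:=fun y x => a x y) (r:=s) (R:=T0) Nlx) as [c' [Hc'1 Hc'2]]; eauto.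
    { intros; apply Hs; auto. }
    destruct (fsum_mono_f (l:=lx) (f:=ch) (g:=c') (t:=T0)) as [z [Hz Lz]]; auto.
    { intros x Hx. destruct (HL x Hx) as [[NL HL1] HL2].
      destruct (fsum_incl_le (l1:=L x) (l2:=ly) (f:=a x) NL (proj1 Hly) (Hinc x Hx) (Hc'1 x Hx))
        as [s1 [Hs1 Ls1]]. congruence. }
    exists z, z. repeat split; auto. apply add0l.
    eapply le_trans; [exact Lz|]. eapply le_trans; [exact LT0|].
    apply (Hb ly Tc); auto.
  - rewrite add0l in E2. congruence.
Qed.

Lemma chain_le (c : nat -> U) : (forall n, le (c n) (c (Datatypes.S n))) ->
  forall n m, n <= m -> le (c n) (c m).
Proof.
  intros H n m Hnm. induction Hnm. apply le_refl. eapply le_trans; eauto.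
Qed.

Lemma chain_directed (c : nat -> U) : (forall n, le (c n) (c (Datatypes.S n))) ->
  directed add (fun u => exists n, u = c n).
Proof.
  intro H. split. exists (c 0); eauto.
  intros x y [n ->] [m ->]. exists (c (Nat.max n m)). split. eauto.
  split; apply chain_le; auto; lia.
Qed.

Lemma mct {X} (I : X -> Prop) (a : nat -> X -> U) A B Bs :
  (forall n x, I x -> le (a n x) (a (Datatypes.S n) x)) -> (forall n, is_sum I (a n) (B n)) ->
  (forall x, I x -> is_sup add (fun u => exists n, u = a n x) (A x)) ->
  is_sup add (fun u => exists n, u = B n) Bs -> is_sum I A Bs.
Proof.
  intros Hmono HB HA HBs.
  assert (PA : forall l, finite_sub I l -> exists v, fsum l A = Some v /\ le v Bs).
  { intros l [Nl Hl].
    destruct (@fc_gen X (fun x u => exists n, u = a n x) A l Nl) with (w := zero) (b := Bs)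
      as [z [v [E1 [E2 E3]]]].
    - intros x Hx. split. apply chain_directed. intros; apply Hmono; auto. apply HA; auto.
    - intros ch Hch.
      set (Nf := fun x => epsilon (inhabits 0) (fun n => ch x = a n x)).
      assert (HN : forall x, In x l -> ch x = a (Nf x) x).
      { intros x Hx. unfold Nf. apply (epsilon_spec (inhabits 0) (fun n => ch x = a n x)).
        apply Hch; auto. }
      destruct (nat_bound_f l Nf) as [N HNb].
      destruct (is_sum_le (HB N) (conj Nl Hl)) as [vN [HvN LvN]].
      destruct (fsum_mono_f (l:=l) (f:=ch) (g:=a N) (t:=vN)) as [z [Hz Lz]]; auto.
      { intros x Hx. rewrite HN by auto. apply (chain_le (c:=fun n => a n x)); auto. }
      exists z, z. repeat split; auto. apply add0l.
      eapply le_trans; eauto. eapply le_trans; eauto. apply (le_sup HBs). eauto.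
    - exists z. split; auto. rewrite add0l in E2. congruence. }
  apply is_sum_intro; auto.
  intros b Hb. apply (sup_le HBs). intros u [n ->].
  apply (is_sum_least (HB n)). intros l v Hl Hv.
  destruct (PA l Hl) as [w [Hw _]].
  destruct (fsum_mono_f (l:=l) (f:=a n) (g:=A) (t:=w)) as [v' [Hv' Lv']]; auto.
  { intros x Hx. apply (le_sup (HA x (proj2 Hl x Hx))). eauto. }
  rewrite Hv in Hv'. injection Hv'; intros; subst. eapply le_trans; eauto.
Qed.

Lemma sum_nat_prefix (q : nat -> U) m (Q : nat -> U) : is_sum (fun _ => True) q m ->
  (forall N, fsum (seq 0 N) q = Some (Q N)) -> is_sup add (fun u => exists N, u = Q N) m.
Proof.
  intros H HQ. apply (sup_cofinal (is_sum_sup H)).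
  - intros d [l [[Nl _] Hd]]. destruct (nat_bound l) as [N HN].
    destruct (fsum_incl_le (l1:=l) (l2:=seq 0 N) (f:=q) (s2 := Q N) Nl (seq_NoDup N 0))
      as [s1 [Hs1 Ls1]]; auto.
    { intros n Hn. apply in_seq. specialize (HN n Hn). lia. }
    exists (Q N). split; eauto. congruence.
  - intros d' [N ->]. destruct (is_sum_le (l:=seq 0 N) H) as [v [Hv L]].
    split. apply seq_NoDup. auto. rewrite HQ in Hv. congruence.
Qed.

End Fub.


Section W.
Variable S : PSemiring.
Local Notation U := (car S).
Local Notation add := (@padd S).
Local Notation mul := (@pmul S).
Local Notation zero := (pzero S).
Local Notation one := (pone S).
Local Notation le := (nle (@padd S)).
Local Notation fsum := (@fsum S _).
Local Notation is_sum := (@is_sum S _).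

Lemma supp_zero {X} (m : X -> U) x : ~ supp m x -> m x = zero.
Proof. unfold supp. intro H. destruct (excluded_middle_informative (m x = zero)); tauto. Qed.

Lemma weight_sum {X} (m : X -> U) : is_weight m -> exists s, is_sum (fun _ => True) m s.
Proof.
  intros [_ [s Hs]]. exists s. apply (is_sum_restrict (I := supp m) (J := fun _ => True)); auto.
  intros x _ Hx. apply supp_zero; auto.
Qed.

Lemma weight_of_sum {X} (m : X -> U) s : countable (supp m) -> is_sum (fun _ => True) m s ->
  is_weight m.
Proof.
  intros Hc Hs. split; auto. exists s.
  apply (is_sum_restrict (I := supp m) (J := fun _ => True)) in Hs; auto.
  intros x _ Hx. apply supp_zero; auto.
Qed.

Lemma countable_sub {X} (A B : X -> Prop) : (forall x, A x -> B x) -> countable B -> countable A.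
Proof. intros H [h Hh]. exists h. intros; apply Hh; auto. Qed.

Lemma weight_single {X} (m : X -> U) x0 : (forall y, y <> x0 -> m y = zero) -> is_weight m.
Proof.
  intro H. apply weight_of_sum with (s := m x0).
  - exists (fun _ => 0). intros x y Hx Hy _.
    destruct (excluded_middle_informative (x = x0)); destruct (excluded_middle_informative (y = x0));
      subst; auto.
    + exfalso. apply Hy, H; auto.
    + exfalso. apply Hx, H; auto.
    + exfalso. apply Hx, H; auto.
  - apply is_sum_single; auto.
Qed.



Lemma weight_zero {X} : is_weight (fun _ : X => zero).
Proof.
  split.
  - exists (fun _ => 0). intros x y Hx. exfalso. apply Hx; auto.
  - exists zero. apply is_sum_empty; auto.
Qed.

Lemma sub_weight {X} (m1 m2 : X -> U) : (forall y, le (m1 y) (m2 y)) -> is_weight m2 -> is_weight m1.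
Proof.
  intros Hle Hw. destruct (weight_sum Hw) as [s Hs].
  destruct (is_sum_mono (f := m1) (I := fun _ => True) (fun x _ => Hle x) Hs) as [s1 [Hs1 _]].
  apply weight_of_sum with s1; auto.
  apply countable_sub with (supp m2); [|apply Hw].
  intros x Hx E. apply Hx. apply le_zero. rewrite <- E. auto.
Qed.

Lemma lscale_weight {X} u (m : X -> U) : is_weight m -> is_weight (lscale u m).
Proof.
  intros Hw. destruct (weight_sum Hw) as [s Hs].
  apply weight_of_sum with (mul u s).
  - apply countable_sub with (supp m); [|apply Hw].
    intros x Hx E. apply Hx. unfold lscale. rewrite E. apply pmul_0r.
  - apply is_sum_scale_l; auto.
Qed.

Lemma eta_zero {X} (x y : X) : x <> y -> eta S x y = zero.
Proof. intro H. unfold eta. destruct (excluded_middle_informative (x = y)); tauto. Qed.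

Lemma eta_one {X} (x : X) : eta S x x = one.
Proof. unfold eta. destruct (excluded_middle_informative (x = x)); tauto. Qed.

Lemma eta_weight {X} (x : X) : is_weight (eta S x).
Proof. apply weight_single with x. intros y Hy. apply eta_zero. auto. Qed.

Lemma supp_eta {X} (x y : X) : supp (eta S x) y -> y = x.
Proof.
  intro H. destruct (excluded_middle_informative (y = x)); auto.
  exfalso. apply H, eta_zero. auto.
Qed.

Lemma decomp_eta {X} (m : X -> U) y :
  is_sum (fun _ => True) (fun x => mul (m x) (eta S x y)) (m y).
Proof.
  pose proof (@is_sum_single S X (fun _ => True) (fun x => mul (m x) (eta S x y)) y) as H.
  cbv beta in H. rewrite eta_one, pmul_1r in H. apply H; auto.
  intros x _ Hx. rewrite eta_zero; auto. apply pmul_0r.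
Qed.

Lemma bind_iff {X Y} (F : X -> (Y -> U) -> Prop) m m' :
  bind F m m' <-> exists g, (forall x, supp m x -> F x (g x)) /\
     (forall y, is_sum (fun _ => True) (fun x => mul (m x) (g x y)) (m' y)) /\ is_weight m'.
Proof.
  split; intros [g [H1 [H2 H3]]]; exists g; split; auto; split; auto; intro y0.
  - apply (is_sum_restrict (I := supp m) (J := fun _ => True)); auto.
    intros x _ Hx. rewrite (supp_zero Hx). apply pmul_0l.
  - apply (is_sum_restrict (I := supp m) (J := fun _ => True)); auto.
    intros x _ Hx. rewrite (supp_zero Hx). apply pmul_0l.
Qed.

Lemma bind_eta {X Y} (F : X -> (Y -> U) -> Prop) x m' : one <> zero ->
  bind F (eta S x) m' -> F x m'.
Proof.
  intros N H. apply bind_iff in H. destruct H as [g [H1 [H2 H3]]].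
  assert (E : m' = g x).
  { apply functional_extensionality. intro y.
    pose proof (@is_sum_single S X (fun _ => True) (fun x' => mul (eta S x x') (g x' y)) x) as Hs.
    cbv beta in Hs. rewrite eta_one, pmul_1l in Hs.
    eapply is_sum_unique. apply H2. apply Hs; auto.
    intros x' _ Hx'. rewrite eta_zero; auto. apply pmul_0l. }
  subst. apply H1. unfold supp. rewrite eta_one. auto.
Qed.

Lemma wadd_fun {X} (m1 m2 r r' : X -> U) : wadd m1 m2 r -> wadd m1 m2 r' -> r = r'.
Proof.
  intros H1 H2. apply functional_extensionality. intro x. specialize (H1 x). specialize (H2 x).
  congruence.
Qed.

Lemma wle_le {X} (m1 m2 : X -> U) : wle m1 m2 -> forall x, le (m1 x) (m2 x).
Proof. intros [m [_ H]] x. exists (m x). apply H. Qed.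

End W.


Section Sem.
Variable S : PSemiring.
Variables (Sigma Act Tst : Type).
Variable asem : Act -> Sigma -> (Sigma -> car S).
Variable tsem : Tst -> Sigma -> bool.
Hypothesis Hasem : forall a s, is_weight (asem a s).
Local Notation U := (car S).
Local Notation add := (@padd S).
Local Notation mul := (@pmul S).
Local Notation zero := (pzero S).
Local Notation one := (pone S).
Local Notation le := (nle (@padd S)).
Local Notation is_sum := (@is_sum S _).
Local Notation Sem := (sem asem tsem).
Local Notation Der := (derives tsem (Omega asem tsem)).
Local Notation W := (Sigma -> U).

Lemma sem_weight C : forall s r, Sem C s r -> is_weight r.
Proof.
  induction C; intros s r H; simpl in H.
  - subst. apply eta_weight.
  - destruct H as [m1 [_ [g [_ [_ Hw]]]]]. auto.
  - destruct H as [m1 [m2 [_ [_ [_ Hw]]]]]. auto.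
  - subst. apply lscale_weight, eta_weight.
  - destruct H as [f [[[Hw _] _] ->]]. auto.
  - subst. auto.
Qed.

Lemma sem_det C : forall s r r', Sem C s r -> Sem C s r' -> r = r'.
Proof.
  induction C; intros s r r' H H'; simpl in H, H'.
  - congruence.
  - destruct H as [m1 [H1 Hb]]. destruct H' as [m1' [H1' Hb']].
    rewrite <- (IHC1 _ _ _ H1 H1') in Hb'.
    apply bind_iff in Hb, Hb'.
    destruct Hb as [g [Hg1 [Hg2 _]]]. destruct Hb' as [g' [Hg1' [Hg2' _]]].
    apply functional_extensionality. intro y.
    eapply is_sum_unique. apply Hg2.
    eapply is_sum_ext; [|exact (Hg2' y)]. intros x _. simpl.
    destruct (excluded_middle_informative (supp m1 x)) as [Hx|Hx].
    + replace (g' x) with (g x); auto. apply (IHC2 x); [apply Hg1 | apply Hg1']; auto.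
    + rewrite (supp_zero Hx), !pmul_0l. auto.
  - destruct H as [m1 [m2 [H1 [H2 [H3 _]]]]]. destruct H' as [m1' [m2' [H1' [H2' [H3' _]]]]].
    rewrite <- (IHC1 _ _ _ H1 H1'), <- (IHC2 _ _ _ H2 H2') in H3'.
    eapply wadd_fun; eauto.
  - congruence.
  - destruct H as [f [[Hf Hmin] ->]]. destruct H' as [f' [[Hf' Hmin'] ->]].
    apply functional_extensionality. intro y. apply nle_antisym.
    + apply wle_le. apply Hmin; auto.
    + apply wle_le. apply Hmin'; auto.
  - congruence.
Qed.

Definition Ppt (C : cmd S Act Tst) : Prop :=
  forall x r, Sem C x r -> Der (fun m => m = eta S x) C (fun m => m = r).

Lemma lscale0 (m : W) : lscale zero m = fun _ => zero.
Proof. apply functional_extensionality. intro. unfold lscale. apply pmul_0l. Qed.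

Lemma der_zero C (m0 m1 : W) : m0 = (fun _ => zero) -> m1 = (fun _ => zero) ->
  Der (fun w => w = m0) C (fun w => w = m1).
Proof.
  intros -> ->.
  eapply d_conseq with (p := bigoplus (T:=False) (fun t => match t with end))
                       (q := bigoplus (T:=False) (fun t => match t with end)).
  - intros w ->. exists (fun t : False => match t with end). split. intros [].
    split. intro y. apply is_sum_empty. intros []. auto. apply weight_zero.
  - apply d_choice. intros [].
  - intros w [ms [_ [Hs _]]]. apply functional_extensionality. intro y.
    destruct (@is_sum_empty S False (fun _ : False => True) (fun t => ms t y) (w y)) as [E _].
    intros []. apply E, Hs.
  - intros w ->. apply weight_zero.
Qed.

Lemma dec C (HP : Ppt C) (m : W) (Hm : is_weight m) (g : Sigma -> W)
  (Hg : forall x, supp m x -> Sem C x (g x)) :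
  Der (fun m0 => m0 = m) C
    (fun w => (forall y, is_sum (fun _ => True) (fun x => mul (m x) (g x y)) (w y)) /\ is_weight w).
Proof.
  eapply d_conseq with (p := bigoplus (fun x => fun w => w = lscale (m x) (eta S x)))
                       (q := bigoplus (fun x => fun w => w = lscale (m x) (g x))).
  - intros w ->. exists (fun x => lscale (m x) (eta S x)). split. intros; reflexivity.
    split; auto. intro y. apply decomp_eta.
  - apply d_choice. intro x.
    destruct (excluded_middle_informative (supp m x)) as [Hx|Hx].
    + eapply d_conseq with (p := aodot_l (m x) (fun w => w = eta S x))
                           (q := aodot_l (m x) (fun w => w = g x)).
      * intros w ->. exists (eta S x). auto.
      * apply d_scale. apply HP. apply Hg; auto.
      * intros w [m0 [-> ->]]. reflexivity.
      * intros w ->. apply lscale_weight. eapply sem_weight. apply Hg; auto.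
    + rewrite (supp_zero Hx). apply der_zero; apply lscale0.
  - intros w [ms [Hms [Hs Hw]]]. split; auto. intro y.
    eapply is_sum_ext; [|exact (Hs y)]. intros x _. specialize (Hms x). cbv beta in Hms |- *. rewrite Hms. reflexivity.
  - intros w [_ Hw]; auto.
Qed.

Lemma dec_bind C (HP : Ppt C) (m r : W) : is_weight m -> bind (Sem C) m r ->
  Der (fun m0 => m0 = m) C (fun w => w = r).
Proof.
  intros Hm Hb. pose proof Hb as Hb'. apply bind_iff in Hb. destruct Hb as [g [Hg1 [Hg2 Hw]]].
  eapply d_conseq; [| apply (dec HP Hm Hg1) | |].
  - auto.
  - intros w [Hs _]. apply functional_extensionality. intro y.
    eapply is_sum_unique; eauto.
  - intros w ->; auto.
Qed.

Lemma dec_post C (HP : Ppt C) (m : W) : is_weight m -> (forall x, supp m x -> exists r, Sem C x r) ->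
  Der (fun m0 => m0 = m) C (post asem tsem C (fun m0 => m0 = m)).
Proof.
  intros Hm Hex.
  set (g := fun x => epsilon (inhabits (fun _ : Sigma => zero)) (Sem C x)).
  assert (Hg : forall x, supp m x -> Sem C x (g x)).
  { intros x Hx. unfold g. apply epsilon_spec. auto. }
  eapply d_conseq; [| apply (dec HP Hm Hg) | |].
  - auto.
  - intros w [Hs Hw]. exists m. split; auto. apply bind_iff. exists g. auto.
  - intros w [m0 [_ Hb]]. destruct Hb as [_ [_ [_ Hw]]]. auto.
Qed.

Lemma main_gen C (HP : Ppt C) (phi : asrt S Sigma) : asrtW phi ->
  (forall m, phi m -> forall x, supp m x -> exists r, Sem C x r) ->
  Der phi C (post asem tsem C phi).
Proof.
  intros Hphi Hex.
  eapply d_conseq with (p := aunion (fun t : {m | phi m} => fun m0 => m0 = proj1_sig t))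
                       (q := aunion (fun t : {m | phi m} =>
                                  post asem tsem C (fun m0 => m0 = proj1_sig t))).
  - intros m Hm. exists (exist _ m Hm). reflexivity.
  - apply d_exists. intros [m Hm]. simpl. apply dec_post; auto. apply (Hex m Hm).
  - intros w [[m Hm] [m0 [E Hb]]]. simpl in E. subst. exists m. auto.
  - intros w [m0 [_ Hb]]. destruct Hb as [_ [_ [_ Hw]]]. auto.
Qed.

Lemma post_weight C (phi : asrt S Sigma) : asrtW (post asem tsem C phi).
Proof. intros w [m0 [_ Hb]]. destruct Hb as [_ [_ [_ Hw]]]. auto. Qed.

Lemma P_skip : Ppt (Skip S Act Tst).
Proof.
  intros x r H. simpl in H. subst. apply d_skip. intros w ->. apply eta_weight.
Qed.

Lemma P_atom a : Ppt (Atom S Tst a).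
Proof.
  intros x r H. simpl in H. subst. apply d_ax. split. eauto. split. intros w ->; apply eta_weight.
  split. intros w ->; auto.
  intros m m' -> Hb.
  destruct (excluded_middle_informative (one = zero)) as [E|E].
  - apply functional_extensionality. intro y. rewrite (one_zero_triv E (m' y)).
    rewrite (one_zero_triv E (asem a x y)). auto.
  - apply (bind_eta E) in Hb. simpl in Hb. auto.
Qed.

Lemma P_assume e : Ppt (Assume Act e).
Proof.
  intros x r H. simpl in H. subst.
  eapply d_conseq; [| eapply d_assume with (u := eeval tsem e x) | |].
  - intros m0 Hm0; exact Hm0.
  - intros w ->. apply eta_weight.
  - intros m s -> Hs. rewrite (supp_eta Hs). auto.
  - intros w [m0 [-> ->]]. apply functional_extensionality. intro y. unfold rscale, lscale.
    destruct (excluded_middle_informative (x = y)) as [<-|N].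
    + rewrite eta_one, pmul_1l, pmul_1r. auto.
    + rewrite eta_zero by auto. rewrite pmul_0l, pmul_0r. auto.
  - intros w ->. apply lscale_weight, eta_weight.
Qed.

Lemma P_plus C1 C2 : Ppt C1 -> Ppt C2 -> Ppt (Plus C1 C2).
Proof.
  intros H1 H2 x r H. simpl in H. destruct H as [m1 [m2 [E1 [E2 [E3 Hw]]]]].
  eapply d_conseq; [| apply d_plus; [apply (H1 _ _ E1) | apply (H2 _ _ E2)] | |].
  - auto.
  - intros w [a [b [-> [-> [Hab _]]]]]. eapply wadd_fun; eauto.
  - intros w ->; auto.
Qed.

Lemma P_seq C1 C2 : Ppt C1 -> Ppt C2 -> Ppt (Seq C1 C2).
Proof.
  intros H1 H2 x r H. simpl in H. destruct H as [m1 [E1 Hb]].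
  eapply d_seq. apply (H1 _ _ E1). apply dec_bind; auto. eapply sem_weight; eauto.
Qed.

End Sem.


Section Iter.
Variable S : PSemiring.
Variables (Sigma Act Tst : Type).
Variable asem : Act -> Sigma -> (Sigma -> car S).
Variable tsem : Tst -> Sigma -> bool.
Hypothesis Hasem : forall a s, is_weight (asem a s).
Local Notation U := (car S).
Local Notation add := (@padd S).
Local Notation mul := (@pmul S).
Local Notation zero := (pzero S).
Local Notation one := (pone S).
Local Notation le := (nle (@padd S)).
Local Notation fsum := (@fsum S _).
Local Notation is_sum := (@is_sum S _).
Local Notation Sem := (sem asem tsem).
Local Notation Der := (derives tsem (Omega asem tsem)).
Local Notation W := (Sigma -> U).
Local Notation T := (fun _ : Sigma => True).

Definition zf : W := fun _ => zero.

Lemma is_sum_zero {X} (I : X -> Prop) : is_sum I (fun _ => zero) zero.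
Proof.
  apply is_sum_intro.
  - intros l _. exists zero. split. apply fsum_zero; auto. apply le_refl.
  - intros b Hb. apply zero_le.
Qed.

Lemma fsum_map {X Y} (g : X -> Y) l (F : Y -> U) : fsum (map g l) F = fsum l (fun x => F (g x)).
Proof.
  induction l as [|x l IH]; auto. simpl map. rewrite !fsum_cons_eq, IH. auto.
Qed.

Lemma fsum_seq_shift k N (F : nat -> U) :
  fsum (seq (Datatypes.S k) N) F = fsum (seq k N) (fun n => F (Datatypes.S n)).
Proof. rewrite <- seq_shift. apply fsum_map. Qed.

Lemma bind_det {X Y} (F : X -> (Y -> U) -> Prop) m r1 r2 :
  (forall x r r', F x r -> F x r' -> r = r') -> bind F m r1 -> bind F m r2 -> r1 = r2.
Proof.
  intros Hd H1 H2. apply bind_iff in H1, H2.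
  destruct H1 as [g [Hg1 [Hg2 _]]]. destruct H2 as [g' [Hg1' [Hg2' _]]].
  apply functional_extensionality. intro y.
  eapply is_sum_unique. apply Hg2.
  eapply is_sum_ext; [|exact (Hg2' y)]. intros x _. simpl.
  destruct (excluded_middle_informative (supp m x)) as [Hx|Hx].
  - replace (g' x) with (g x); [auto|]. apply (Hd x); [apply Hg1|apply Hg1']; auto.
  - rewrite (supp_zero Hx), !pmul_0l. auto.
Qed.

Lemma assume_bind_val (e0 : exp S Tst) w w' : bind (Sem (Assume Act e0)) w w' ->
  forall t, w' t = mul (w t) (eeval tsem e0 t).
Proof.
  intros H t. apply bind_iff in H. destruct H as [g [Hg1 [Hg2 _]]].
  assert (Hz : forall x, x <> t -> mul (w x) (g x t) = zero).
  { intros x Hx. destruct (excluded_middle_informative (supp w x)) as [Hs|Hs].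
    - rewrite (Hg1 x Hs). unfold lscale. rewrite eta_zero by auto. rewrite pmul_0r, pmul_0r. auto.
    - rewrite (supp_zero Hs). apply pmul_0l. }
  pose proof (@is_sum_single S Sigma T (fun x => mul (w x) (g x t)) t (fun x _ => Hz x)) as Hs.
  cbv beta in Hs. rewrite (is_sum_unique (Hg2 t) (Hs (or_introl I))).
  destruct (excluded_middle_informative (supp w t)) as [Ht|Ht].
  - rewrite (Hg1 t Ht). unfold lscale. rewrite eta_one, pmul_1r. auto.
  - rewrite (supp_zero Ht), !pmul_0l. auto.
Qed.

Section Fix.
Variable C : cmd S Act Tst.
Variables e e' : exp S Tst.
Variable f : Sigma -> W.
Hypothesis Hlfp : is_lfp tsem (Sem C) e e' f.

Local Notation E s := (eeval tsem e s).
Local Notation E' s := (eeval tsem e' s).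
Local Notation PhiI := (PhiR tsem (Sem C) e e').

Lemma f_fix s : PhiI f s (f s).
Proof. apply Hlfp. Qed.
Lemma f_w s : is_weight (f s).
Proof. apply Hlfp. Qed.

Definition Cf s : W := epsilon (inhabits zf) (Sem C s).
Lemma Cf_spec s : Sem C s (Cf s).
Proof.
  unfold Cf. apply epsilon_spec. destruct (f_fix s) as [mC [_ [H _]]]. eauto.
Qed.

Lemma Phi_val k s r : PhiI k s r -> exists b,
  (forall t, is_sum T (fun x => mul (Cf s x) (k x t)) (b t)) /\
  (forall t, add (mul (E s) (b t)) (mul (E' s) (eta S s t)) = Some (r t)) /\ is_weight b.
Proof.
  intros [mC [b [H1 [H2 [H3 H4]]]]].
  rewrite (sem_det H1 (Cf_spec s)) in H2.
  pose proof H2 as H2'. apply bind_iff in H2. destruct H2 as [g [Hg1 [Hg2 Hw]]].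
  exists b. split; [|split]; auto.
  intro t. eapply is_sum_ext; [|exact (Hg2 t)]. intros x _. simpl.
  destruct (excluded_middle_informative (supp (Cf s) x)) as [Hx|Hx].
  - rewrite (Hg1 x Hx). auto.
  - rewrite (supp_zero Hx), !pmul_0l. auto.
Qed.

Lemma Phi_intro k s b r : (forall t, is_sum T (fun x => mul (Cf s x) (k x t)) (b t)) ->
  is_weight b -> (forall t, add (mul (E s) (b t)) (mul (E' s) (eta S s t)) = Some (r t)) ->
  is_weight r -> PhiI k s r.
Proof.
  intros H1 H2 H3 H4. exists (Cf s), b. split. apply Cf_spec. split.
  - apply bind_iff. exists k. split; auto.
  - split; auto.
Qed.

Lemma Phi_mono k k' s r r' : (forall x t, le (k x t) (k' x t)) -> PhiI k s r -> PhiI k' s r' ->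
  forall t, le (r t) (r' t).
Proof.
  intros Hk H H' t. destruct (Phi_val H) as [b [Hb1 [Hb2 _]]].
  destruct (Phi_val H') as [b' [Hb1' [Hb2' _]]].
  assert (L : le (b t) (b' t)).
  { eapply is_sum_mono_le; [|apply Hb1|apply Hb1']. intros x _. apply mul_mono_l, Hk. }
  eapply add_mono_eq; [apply mul_mono_l, L | apply le_refl | apply Hb2' | apply Hb2].
Qed.

Lemma Phi_exists k : (forall x t, le (k x t) (f x t)) -> forall s, exists r, PhiI k s r.
Proof.
  intros Hk s. destruct (Phi_val (f_fix s)) as [bf [Hbf1 [Hbf2 Hbfw]]].
  set (bk := fun t => epsilon (inhabits zero) (is_sum T (fun x => mul (Cf s x) (k x t)))).
  assert (Hbk : forall t, is_sum T (fun x => mul (Cf s x) (k x t)) (bk t) /\ le (bk t) (bf t)).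
  { intro t. destruct (is_sum_mono (f := fun x => mul (Cf s x) (k x t)) (fun x _ => mul_mono_l _ (Hk x t)) (Hbf1 t))
      as [v [Hv Lv]].
    assert (Hs : is_sum T (fun x => mul (Cf s x) (k x t)) (bk t)).
    { unfold bk. apply epsilon_spec. eauto. }
    split; auto. rewrite (is_sum_unique Hs Hv). auto. }
  set (r := fun t => dflt (add (mul (E s) (bk t)) (mul (E' s) (eta S s t)))).
  assert (Hr : forall t, add (mul (E s) (bk t)) (mul (E' s) (eta S s t)) = Some (r t) /\ le (r t) (f s t)).
  { intro t. destruct (add_mono (mul_mono_l (E s) (proj2 (Hbk t))) (le_refl (mul (E' s) (eta S s t))) (Hbf2 t))
      as [v [Hv Lv]]. unfold r. rewrite Hv. auto. }
  exists r. apply Phi_intro with bk.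
  - intro t; apply Hbk.
  - apply sub_weight with bf; auto. intro t; apply Hbk.
  - intro t; apply Hr.
  - apply sub_weight with (f s). intro t; apply Hr. apply f_w.
Qed.

Fixpoint hk (n : nat) : Sigma -> W :=
  match n with
  | 0 => fun _ => zf
  | Datatypes.S n => fun s => epsilon (inhabits zf) (PhiI (hk n) s)
  end.

Lemma hk_prop n : (forall s, PhiI (hk n) s (hk (Datatypes.S n) s)) /\ (forall s t, le (hk n s t) (f s t)).
Proof.
  induction n as [|n [IH1 IH2]].
  - assert (Hle : forall s t, le (hk 0 s t) (f s t)) by (intros; apply zero_le).
    split; auto. intro s. simpl hk at 2. apply epsilon_spec. apply (Phi_exists Hle).
  - assert (Hle : forall s t, le (hk (Datatypes.S n) s t) (f s t)).
    { intros s t. eapply Phi_mono; [exact IH2 | apply IH1 | apply f_fix]. }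
    split; auto. intro s. change (hk (Datatypes.S (Datatypes.S n)) s) with
      (epsilon (inhabits zf) (PhiI (hk (Datatypes.S n)) s)).
    apply epsilon_spec. apply (Phi_exists Hle).
Qed.

Lemma hk_mono n : forall s t, le (hk n s t) (hk (Datatypes.S n) s t).
Proof.
  induction n as [|n IH]; intros s t.
  - apply zero_le.
  - eapply Phi_mono; [exact IH | apply hk_prop | apply hk_prop].
Qed.

Definition BB n s t : U := epsilon (inhabits zero) (is_sum T (fun x => mul (Cf s x) (hk n x t))).

Lemma BB_spec n s t : is_sum T (fun x => mul (Cf s x) (hk n x t)) (BB n s t) /\
  add (mul (E s) (BB n s t)) (mul (E' s) (eta S s t)) = Some (hk (Datatypes.S n) s t).
Proof.
  destruct (Phi_val (proj1 (hk_prop n) s)) as [b [Hb1 [Hb2 _]]].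
  assert (H : is_sum T (fun x => mul (Cf s x) (hk n x t)) (BB n s t)).
  { unfold BB. apply epsilon_spec. eauto. }
  split; auto. rewrite (is_sum_unique H (Hb1 t)). auto.
Qed.

Definition gk s t : U := epsilon (inhabits zero) (is_sup add (fun u => exists n, u = hk n s t)).

Lemma gk_sup s t : is_sup add (fun u => exists n, u = hk n s t) (gk s t).
Proof.
  unfold gk. apply epsilon_spec. apply dir_sup. apply chain_directed. intro n. apply hk_mono.
Qed.

Lemma gk_le_f s t : le (gk s t) (f s t).
Proof. apply (sup_le (gk_sup s t)). intros u [n ->]. apply hk_prop. Qed.

Lemma shift_sup (c : nat -> U) s : (forall n, le (c n) (c (Datatypes.S n))) ->
  is_sup add (fun u => exists n, u = c n) s -> is_sup add (fun u => exists n, u = c (Datatypes.S n)) s.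
Proof.
  intros Hc Hs. apply (sup_cofinal Hs).
  - intros d [n ->]. exists (c (Datatypes.S n)). split; eauto.
  - intros d [n ->]. apply (le_sup Hs). eauto.
Qed.

Lemma gk_fix : is_fix tsem (Sem C) e e' gk.
Proof.
  assert (Hgw : forall s, is_weight (gk s)).
  { intro s. apply sub_weight with (f s). intro t; apply gk_le_f. apply f_w. }
  split; auto. intro s.
  destruct (Phi_val (f_fix s)) as [bf [Hbf1 [Hbf2 Hbfw]]].
  assert (Bmono : forall t n, le (BB n s t) (BB (Datatypes.S n) s t)).
  { intros t n. eapply is_sum_mono_le; [|apply BB_spec|apply BB_spec].
    intros x _. apply mul_mono_l, hk_mono. }
  set (Bs := fun t => epsilon (inhabits zero) (is_sup add (fun u => exists n, u = BB n s t))).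
  assert (HBs : forall t, is_sup add (fun u => exists n, u = BB n s t) (Bs t)).
  { intro t. unfold Bs. apply epsilon_spec. apply dir_sup. apply chain_directed. apply Bmono. }
  assert (HsumBs : forall t, is_sum T (fun x => mul (Cf s x) (gk x t)) (Bs t)).
  { intro t. apply (mct (a := fun n x => mul (Cf s x) (hk n x t)) (B := fun n => BB n s t)).
    - intros n x _. apply mul_mono_l, hk_mono.
    - intro n. apply BB_spec.
    - intros x _. eapply sup_ext.
      + apply (pmul_contl (Cf s x) (chain_directed (c := fun n => hk n x t) (fun n => hk_mono n x t)) (gk_sup x t)).
      + intro u. split.
        * intros [d [[n ->] ->]]. eauto.
        * intros [n ->]. eauto.
    - apply HBs. }
  apply Phi_intro with Bs; auto.
  - apply sub_weight with bf; auto. intro t. apply (sup_le (HBs t)). intros u [n ->].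
    eapply is_sum_mono_le; [|apply BB_spec|apply Hbf1]. intros x _. apply mul_mono_l, hk_prop.
  - intro t.
    assert (HE : is_sup add (fun u => exists n, u = mul (E s) (BB n s t)) (mul (E s) (Bs t))).
    { eapply sup_ext.
      + apply (pmul_contl (E s) (chain_directed (c := fun n => BB n s t) (Bmono t)) (HBs t)).
      + intro u. split.
        * intros [d [[n ->] ->]]. eauto.
        * intros [n ->]. eauto. }
    assert (Hdir : directed add (fun u => exists n, u = mul (E s) (BB n s t))).
    { apply chain_directed. intro n. apply mul_mono_l, Bmono. }
    destruct (padd_cont (a := mul (E' s) (eta S s t)) Hdir HE) as [v [Hv Sv]].
    { intros d [n ->]. exists (hk (Datatypes.S n) s t). rewrite padd_comm. apply BB_spec. }
    assert (Sv' : is_sup add (fun u => exists n, u = hk (Datatypes.S n) s t) v).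
    { eapply sup_ext; [exact Sv|]. intro u. split.
      - intros [d [[n ->] Hd]]. exists n. rewrite padd_comm in Hd. rewrite (proj2 (BB_spec n s t)) in Hd.
        congruence.
      - intros [n ->]. exists (mul (E s) (BB n s t)). split; eauto.
        rewrite padd_comm. apply BB_spec. }
    pose proof (shift_sup (c := fun n => hk n s t) (fun n => hk_mono n s t) (gk_sup s t)) as Sg.
    rewrite (sup_unique Sg Sv'). rewrite padd_comm. auto.
Qed.

Lemma f_eq_gk s t : f s t = gk s t.
Proof.
  apply nle_antisym.
  - apply wle_le. apply (proj2 Hlfp). apply gk_fix.
  - apply gk_le_f.
Qed.

Lemma claim N : forall (w a : nat -> W), (forall n t, a n t = mul (w n t) (E t)) ->
  (forall n, bind (Sem C) (a n) (w (Datatypes.S n))) ->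
  forall t v, fsum (seq 0 N) (fun n => mul (w n t) (E' t)) = Some v ->
  is_sum T (fun s => mul (w 0 s) (hk N s t)) v.
Proof.
  induction N as [|N IH]; intros w a Ha Hb t v Hv.
  - rewrite fsum_nil in Hv. injection Hv; intros; subst.
    eapply is_sum_ext; [|apply is_sum_zero]. intros s _. simpl. unfold zf. rewrite pmul_0r. auto.
  - change (seq 0 (Datatypes.S N)) with (0 :: seq 1 N) in Hv.
    apply fsum_cons in Hv. destruct Hv as [s' [Hs' Hv]].
    rewrite fsum_seq_shift in Hs'.
    specialize (IH (fun n => w (Datatypes.S n)) (fun n => a (Datatypes.S n))
                  (fun n => Ha (Datatypes.S n)) (fun n => Hb (Datatypes.S n)) t s' Hs').
    cbv beta in IH.
    pose proof (Hb 0) as Hb0. apply bind_iff in Hb0. destruct Hb0 as [gC [HgC1 [HgC2 _]]].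
    destruct (fubini (I := T) (J := T)
                (a := fun r s => mul (mul (a 0 s) (gC s r)) (hk N r t))
                (r := fun r => mul (w 1 r) (hk N r t)) (R := s')) as [c [Hc1 Hc2]].
    { intros r _. apply is_sum_scale_r. apply HgC2. }
    { exact IH. }
    assert (Hcs : forall s, c s = mul (w 0 s) (mul (E s) (BB N s t))).
    { intro s. specialize (Hc1 s I).
      pose proof (is_sum_scale_l (a 0 s) (proj1 (BB_spec N s t))) as H2.
      rewrite pmul_assoc, <- Ha. eapply is_sum_unique; [exact Hc1|].
      eapply is_sum_ext; [|exact H2]. intros r _. simpl.
      destruct (excluded_middle_informative (supp (a 0) s)) as [Hx|Hx].
      - rewrite (sem_det (HgC1 s Hx) (Cf_spec s)). rewrite pmul_assoc. auto.
      - rewrite (supp_zero Hx), !pmul_0l. auto. }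
    assert (HA : is_sum T (fun s => mul (w 0 s) (mul (E s) (BB N s t))) s').
    { eapply is_sum_ext; [|exact Hc2]. intros s _. auto. }
    assert (HB : is_sum T (fun s => mul (w 0 s) (mul (E' s) (eta S s t))) (mul (w 0 t) (E' t))).
    { pose proof (@is_sum_single S Sigma T (fun s => mul (w 0 s) (mul (E' s) (eta S s t))) t) as Hs.
      cbv beta in Hs. rewrite eta_one, pmul_1r in Hs. apply Hs; auto.
      intros s _ Hst. rewrite eta_zero by auto. rewrite !pmul_0r. auto. }
    rewrite padd_comm in Hv.
    apply (is_sum_add HA HB Hv). intros s _. apply pmul_addr. apply BB_spec.
Qed.

End Fix.

Fixpoint iter_ps (step : asrt S Sigma -> asrt S Sigma) (p0 : asrt S Sigma) (n : nat) : asrt S Sigma :=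
  match n with
  | 0 => p0
  | Datatypes.S n => step (iter_ps step p0 n)
  end.

Lemma P_iter C e e' : Ppt asem tsem C -> Ppt asem tsem (Iter C e e').
Proof.
  intros HC x r H. simpl in H. destruct H as [f [Hlfp ->]].
  set (step := fun p => post asem tsem C (post asem tsem (Assume Act e) p)).
  set (ps := iter_ps step (fun w => w = eta S x)).
  set (qs := fun n => post asem tsem (Assume Act e') (ps n)).
  assert (Hpsw : forall n, asrtW (ps n)).
  { intros [|n]. intros w ->; apply eta_weight. apply post_weight. }
  assert (HexC : forall (m : W) s, supp m s -> exists r, Sem C s r).
  { intros. exists (Cf C s). apply (Cf_spec Hlfp). }
  apply (d_iter (ps := ps) (qs := qs)).
  - intros w ->. apply (f_w Hlfp).
  -
    intros ms m Hq [Hs Hw].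
    assert (Hdet : forall n w w', ps n w -> ps n w' -> w = w').
    { induction n as [|n IH]; intros w w' H1 H2.
      - simpl in H1, H2. congruence.
      - destruct H1 as [a1 [[w1 [H11 H12]] H13]]. destruct H2 as [a2 [[w2 [H21 H22]] H23]].
        rewrite (IH _ _ H11 H21) in H12.
        rewrite (bind_det (@sem_det _ _ _ _ asem tsem (Assume Act e)) H12 H22) in H13.
        apply (bind_det (@sem_det _ _ _ _ asem tsem C) H13 H23). }
    set (wn := fun n => epsilon (inhabits zf) (ps n)).
    assert (Hwn : forall n, ps n (wn n)).
    { intro n. unfold wn. apply epsilon_spec. destruct (Hq n) as [w0 [H0 _]]. eauto. }
    assert (Hms : forall n t, ms n t = mul (wn n t) (eeval tsem e' t)).
    { intros n t. destruct (Hq n) as [w0 [H0 H1]]. rewrite (Hdet n _ _ H0 (Hwn n)) in H1.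
      apply (assume_bind_val H1). }
    set (an := fun n => epsilon (inhabits zf)
           (fun a => bind (Sem (Assume Act e)) (wn n) a /\ bind (Sem C) a (wn (Datatypes.S n)))).
    assert (Han : forall n, bind (Sem (Assume Act e)) (wn n) (an n) /\ bind (Sem C) (an n) (wn (Datatypes.S n))).
    { intro n.
      destruct (Hwn (Datatypes.S n)) as [a1 [[w1 [H11 H12]] H13]].
      rewrite (Hdet n _ _ H11 (Hwn n)) in H12.
      exact (epsilon_spec (inhabits zf) (fun a => bind (Sem (Assume Act e)) (wn n) a /\ bind (Sem C) a (wn (Datatypes.S n))) (ex_intro _ a1 (conj H12 H13))). }
    assert (Hw0 : wn 0 = eta S x) by apply (Hwn 0).
    apply functional_extensionality. intro t.
    assert (HQ : forall N, fsum (seq 0 N) (fun n => ms n t) = Some (hk C e e' N x t)).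
    { intro N. destruct (fsum (seq 0 N) (fun n => ms n t)) as [v|] eqn:Ev.
      2:{ exfalso. eapply (is_sum_defined (Hs t)); [|exact Ev]. split. apply seq_NoDup. auto. }
      f_equal.
      assert (Ev' : fsum (seq 0 N) (fun n => mul (wn n t) (eeval tsem e' t)) = Some v).
      { rewrite <- Ev. apply fsum_ext. intros; symmetry; apply Hms. }
      pose proof (claim Hlfp (N := N) (w := wn) (a := an)) as Hcl.
      specialize (Hcl (fun n t0 => assume_bind_val (proj1 (Han n)) t0) (fun n => proj2 (Han n)) t v Ev').
      rewrite Hw0 in Hcl.
      pose proof (@is_sum_single S Sigma T (fun s => mul (eta S x s) (hk C e e' N s t)) x) as Hs1.
      cbv beta in Hs1. rewrite eta_one, pmul_1l in Hs1.
      eapply is_sum_unique; [exact Hcl|]. apply Hs1; auto.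
      intros s _ Hsx. rewrite eta_zero by auto. apply pmul_0l. }
    pose proof (sum_nat_prefix (Hs t) HQ) as Hsup.
    rewrite (f_eq_gk Hlfp). eapply sup_unique; [exact Hsup | apply (gk_sup Hlfp)].
  - intro n. eapply d_seq.
    + apply main_gen; auto. apply P_assume. intros m _ s _. eexists. reflexivity.
    + change (ps (Datatypes.S n)) with (post asem tsem C (post asem tsem (Assume Act e) (ps n))).
      apply main_gen; auto. apply post_weight. intros m _ s Hs0. exact (HexC m s Hs0).
  - intro n. apply main_gen; auto. apply P_assume. intros m _ s _. eexists. reflexivity.
Qed.

End Iter.


Lemma P_all (S : PSemiring) (Sigma Act Tst : Type)
    (asem : Act -> Sigma -> (Sigma -> car S)) (tsem : Tst -> Sigma -> bool)
    (Hasem : forall a s, is_weight (asem a s)) (C : cmd S Act Tst) : Ppt asem tsem C.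
Proof.
  induction C.
  - apply P_skip.
  - apply P_seq; auto.
  - apply P_plus; auto.
  - apply P_assume.
  - apply P_iter; auto.
  - apply P_atom; auto.
Qed.

Theorem lemma3p6 (S : PSemiring) (Sigma Act Tst : Type)
    (asem : Act -> Sigma -> (Sigma -> car S)) (tsem : Tst -> Sigma -> bool)
    (Hasem : forall a s, is_weight (asem a s))
    (C : cmd S Act Tst) (HC : well_formed asem tsem C)
    (phi : asrt S Sigma) (Hphi : asrtW phi) :
  derives tsem (Omega asem tsem) phi C (post asem tsem C phi).
Proof.
  apply (main_gen Hasem (P_all (tsem:=tsem) (C:=C) Hasem) Hphi). intros m _ x _; apply HC.
Qed.
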